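(* Let $\mathcal{I} = \frac{1}{2\pi}\big((0,1)\setminus\mathbb{Q}\big)$. Then for every $\alpha>4/3$, the $\alpha$-dimensional Hausdorff measure of $\phi(\mathcal{I})\subset\mathbb{C}$ vanishes: $\mathcal{H}^{\alpha}(\phi(\mathcal{I}))=0$. In particular $\dim_{\mathcal{H}}\phi(\mathcal{I})\le 4/3$.
   Context: $\phi(t) = \sum_{k \in \mathbb{Z}} \frac{ e^{-4\pi^2 i k^2 t} - 1 }{-4\pi^2 k^2}$ for $t\in\mathbb{R}$, where the $k=0$ term is interpreted as its limit value $it$. $\mathcal{H}^\alpha$ denotes the $\alpha$-dimensional Hausdorff measure on $\mathbb{R}^2\cong\mathbb{C}$. *)

(* Defs.v *)
From Stdlib Require Import Reals Lra ZArith.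
Open Scope R_scope.

Definition Cpt : Type := (R * R)%type.

Definition cdist (p q : Cpt) : R :=
  sqrt ((fst p - fst q) ^ 2 + (snd p - snd q) ^ 2).

Definition diam_le (U : Cpt -> Prop) (d : R) : Prop :=
  forall p q, U p -> U q -> cdist p q <= d.

(* H^alpha(E) = sup_{delta>0} H^alpha_delta(E) = 0, unfolded:
   for every delta > 0 and eps > 0 there is a countable cover of E by sets
   of diameter <= delta whose alpha-powers of diameters sum to <= eps.
   (Positive upper bounds d i >= diam (U i) are used, so that Rpower is
   well defined; this does not change the infimum.) *)
Definition hausdorff_null (alpha : R) (E : Cpt -> Prop) : Prop :=
  forall delta eps : R, 0 < delta -> 0 < eps ->
  exists (U : nat -> Cpt -> Prop) (d : nat -> R),
    (forall i, 0 < d i <= delta /\ diam_le (U i) (d i)) /\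
    (forall p, E p -> exists i, U i p) /\
    (forall n, sum_f_R0 (fun i => Rpower (d i) alpha) n <= eps).

(* The k-th term (e^{-4 pi^2 i k^2 t} - 1) / (-4 pi^2 k^2), split into real
   and imaginary parts; for k = 0 it is the limit value i t. *)
Definition phi_term_re (k : Z) (t : R) : R :=
  if Z.eqb k 0 then 0
  else (1 - cos (4 * PI ^ 2 * (IZR k) ^ 2 * t)) / (4 * PI ^ 2 * (IZR k) ^ 2).

Definition phi_term_im (k : Z) (t : R) : R :=
  if Z.eqb k 0 then t
  else sin (4 * PI ^ 2 * (IZR k) ^ 2 * t) / (4 * PI ^ 2 * (IZR k) ^ 2).

Definition sym_partial (f : Z -> R) (N : nat) : R :=
  sum_f_R0 (fun n => f (Z.of_nat n - Z.of_nat N)%Z) (2 * N).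

(* phi(t) = z : the (absolutely convergent) sum over Z equals z *)
Definition phi_at (t : R) (z : Cpt) : Prop :=
  Un_cv (sym_partial (fun k => phi_term_re k t)) (fst z) /\
  Un_cv (sym_partial (fun k => phi_term_im k t)) (snd z).

Definition is_rational (x : R) : Prop :=
  exists p q : Z, q <> 0%Z /\ x = IZR p / IZR q.

Definition in_I (t : R) : Prop :=
  0 < 2 * PI * t < 1 /\ ~ is_rational (2 * PI * t).

Definition phi_I (z : Cpt) : Prop := exists t, in_I t /\ phi_at t z.

(* Main.v *)
Require Import Defs.
From Stdlib Require Import Reals Lra Lia ZArith.
From Coquelicot Require Import Coquelicot.
Open Scope R_scope.

Fixpoint RS (f : nat -> R) (a n : nat) : R :=
  match n with O => 0 | S n' => RS f a n' + f (a + n')%nat end.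

Lemma RS_split f a n m : RS f a (n + m) = RS f a n + RS f (a + n) m.
Proof.
  induction m; simpl.
  - rewrite Nat.add_0_r; lra.
  - rewrite Nat.add_succ_r; simpl. rewrite IHm. rewrite Nat.add_assoc. lra.
Qed.

Lemma RS_ext f g a n : (forall k, (a <= k < a + n)%nat -> f k = g k) -> RS f a n = RS g a n.
Proof.
  induction n; intros H; simpl; auto.
  rewrite IHn by (intros; apply H; lia). rewrite (H (a+n)%nat) by lia. reflexivity.
Qed.

Lemma RS_plus f g a n : RS (fun k => f k + g k) a n = RS f a n + RS g a n.
Proof. induction n; simpl; lra. Qed.

Lemma RS_minus f g a n : RS (fun k => f k - g k) a n = RS f a n - RS g a n.
Proof. induction n; simpl; lra. Qed.

Lemma RS_scal c f a n : RS (fun k => c * f k) a n = c * RS f a n.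
Proof. induction n; simpl; lra. Qed.

Lemma RS_abs f a n : Rabs (RS f a n) <= RS (fun k => Rabs (f k)) a n.
Proof.
  induction n; simpl. rewrite Rabs_R0; lra.
  eapply Rle_trans. apply Rabs_triang. lra.
Qed.

Lemma RS_le f g a n : (forall k, (a <= k < a + n)%nat -> f k <= g k) -> RS f a n <= RS g a n.
Proof.
  induction n; intros H; simpl. lra.
  assert (RS f a n <= RS g a n) by (apply IHn; intros; apply H; lia).
  assert (f (a+n)%nat <= g (a+n)%nat) by (apply H; lia). lra.
Qed.

Lemma RS_nonneg f a n : (forall k, (a <= k < a + n)%nat -> 0 <= f k) -> 0 <= RS f a n.
Proof.
  intros H. replace 0 with (RS (fun _ => 0) a n). apply RS_le; auto.
  induction n; simpl; auto. rewrite IHn. lra. intros; apply H; lia.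
Qed.

Lemma RS_const c a n : RS (fun _ => c) a n = INR n * c.
Proof. induction n; simpl RS. simpl; lra. rewrite IHn, S_INR. lra. Qed.

Lemma RS_shift f a n : RS f a n = RS (fun k => f (a + k)%nat) 0 n.
Proof. induction n; simpl; auto. rewrite IHn. reflexivity. Qed.

Lemma RS_mono_n f a n m : (n <= m)%nat -> (forall k, 0 <= f k) -> RS f a n <= RS f a m.
Proof.
  intros Hnm Hf. replace m with (n + (m - n))%nat by lia. rewrite RS_split.
  assert (0 <= RS f (a+n) (m-n)) by (apply RS_nonneg; auto). lra.
Qed.

Lemma RS_telescope g a n : RS (fun k => g k - g (S k)) a n = g a - g (a + n)%nat.
Proof.
  induction n; simpl. rewrite Nat.add_0_r; lra.
  rewrite IHn. rewrite Nat.add_succ_r. lra.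
Qed.

Lemma abel_identity (a b : nat -> R) a0 n :
  RS (fun k => a k * b k) a0 (S n) =
  RS a a0 (S n) * b (a0 + n)%nat +
  RS (fun k => RS a a0 (S k) * (b (a0 + k)%nat - b (a0 + S k)%nat)) 0 n.
Proof.
  induction n.
  - simpl. lra.
  - change (RS (fun k => a k * b k) a0 (S (S n))) with
      (RS (fun k => a k * b k) a0 (S n) + a (a0 + S n)%nat * b (a0 + S n)%nat).
    rewrite IHn.
    change (RS a a0 (S (S n))) with (RS a a0 (S n) + a (a0 + S n)%nat).
    change (RS (fun k => RS a a0 (S k) * (b (a0 + k)%nat - b (a0 + S k)%nat)) 0 (S n))
      with (RS (fun k => RS a a0 (S k) * (b (a0 + k)%nat - b (a0 + S k)%nat)) 0 n
            + RS a a0 (S (0 + n)) * (b (a0 + (0+n))%nat - b (a0 + S (0+n))%nat)).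
    simpl (0 + n)%nat. ring.
Qed.

Lemma abel_bound (a b : nat -> R) a0 n (P : nat -> R) :
  (forall j, (1 <= j <= S n)%nat -> Rabs (RS a a0 j) <= P j) ->
  Rabs (RS (fun k => a k * b k) a0 (S n)) <=
  P (S n) * Rabs (b (a0 + n)%nat) +
  RS (fun k => P (S k) * Rabs (b (a0 + k)%nat - b (a0 + S k)%nat)) 0 n.
Proof.
  intros HP. rewrite abel_identity.
  eapply Rle_trans. apply Rabs_triang. apply Rplus_le_compat.
  - rewrite Rabs_mult. apply Rmult_le_compat_r. apply Rabs_pos. apply HP; lia.
  - eapply Rle_trans. apply RS_abs. apply RS_le. intros k Hk.
    rewrite Rabs_mult. apply Rmult_le_compat_r. apply Rabs_pos. apply HP; lia.
Qed.

Lemma RS_first f a n : RS f a (S n) = f a + RS f (S a) n.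
Proof.
  induction n. simpl. rewrite Nat.add_0_r; lra.
  change (RS f a (S (S n))) with (RS f a (S n) + f (a + S n)%nat).
  rewrite IHn. simpl. replace (S (a + n)) with (a + S n)%nat by lia. lra.
Qed.

Lemma RS_rev f n : RS f 0 n = RS (fun k => f (n - 1 - k)%nat) 0 n.
Proof.
  induction n. reflexivity.
  change (RS f 0 (S n)) with (RS f 0 n + f (0 + n)%nat).
  rewrite (RS_first (fun k => f (S n - 1 - k)%nat)). rewrite IHn.
  rewrite (RS_shift _ 1). 
  assert (RS (fun k => f (n - 1 - k)%nat) 0 n = RS (fun k => f (S n - 1 - (1 + k))%nat) 0 n).
  { apply RS_ext. intros; f_equal; lia. }
  replace (S n - 1 - 0)%nat with n by lia. simpl (0+n)%nat. lra.
Qed.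

Lemma RS_rmul f a n c : RS (fun k => f k * c) a n = RS f a n * c.
Proof. induction n; simpl; lra. Qed.

Lemma triangle (h : nat -> nat -> R) M :
  RS (fun k => RS (fun l => h (k - l)%nat l) 0 k) 0 M =
  RS (fun d => RS (fun l => h d l) 0 (M - d)) 1 (M - 1).
Proof.
  induction M.
  - reflexivity.
  - simpl RS at 1. rewrite IHM.
    destruct M.
    + simpl. lra.
    + replace (S (S M) - 1)%nat with (S M) by lia.
      replace (S M - 1)%nat with M by lia.
      change (RS (fun d => RS (fun l => h d l) 0 (S (S M) - d)) 1 (S M)) with
        (RS (fun d => RS (fun l => h d l) 0 (S (S M) - d)) 1 M +
         RS (fun l => h (1 + M)%nat l) 0 (S (S M) - (1 + M))).
      replace (S (S M) - (1 + M))%nat with 1%nat by lia.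
      assert (E: RS (fun d => RS (fun l => h d l) 0 (S (S M) - d)) 1 M =
              RS (fun d => RS (fun l => h d l) 0 (S M - d)) 1 M +
              RS (fun d => h d (S M - d)%nat) 1 M).
      { rewrite <- RS_plus. apply RS_ext. intros d Hd.
        replace (S (S M) - d)%nat with (S (S M - d)) by lia. simpl. lra. }
      rewrite E.
      rewrite (RS_rev (fun l => h (S M - l)%nat l)).
      rewrite (RS_shift (fun d => h d (S M - d)%nat)).
      assert (RS (fun k => h (S M - (S M - 1 - k))%nat (S M - 1 - k)%nat) 0 (S M) =
              RS (fun k => h (1 + k)%nat (S M - (1 + k))%nat) 0 (S M)).
      { apply RS_ext. intros k Hk. f_equal; lia. }
      rewrite H.
      change (RS (fun k => h (1 + k)%nat (S M - (1 + k))%nat) 0 (S M)) with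
        (RS (fun k => h (1 + k)%nat (S M - (1 + k))%nat) 0 M + h (1 + (0 + M))%nat (S M - (1 + (0 + M)))%nat).
      replace (S M - (1 + (0 + M)))%nat with 0%nat by lia.
      change (RS (fun l => h (1 + M)%nat l) 0 1) with (0 + h (1+M)%nat (0 + 0)%nat).
      simpl (1 + (0 + M))%nat. simpl (0+0)%nat. simpl (1 + M)%nat.
      assert (RS (fun d => RS (fun l => h d l) 0 (S M - d)) 1 M =
        RS (fun d : nat => RS (fun l : nat => h d l) 0 match d with
                                 | 0 => S M
                                 | S l => M - l
                                 end) 1 M) by reflexivity.
      lra.
Qed.

Definition theta (x : R) (k : nat) : R := 2 * PI * (INR k)^2 * x.
Definition Sc x a M := RS (fun k => cos (theta x k)) a M.
Definition Ss x a M := RS (fun k => sin (theta x k)) a M.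

Lemma sq_sum_gen (c s : nat -> R) a M :
  (RS c a M)^2 + (RS s a M)^2 =
  RS (fun k => RS (fun l => c k * c l + s k * s l) a M) a M.
Proof.
  assert (RS (fun k => RS (fun l => c k * c l + s k * s l) a M) a M =
          RS (fun k => c k * RS c a M + s k * RS s a M) a M).
  { apply RS_ext. intros k _. rewrite RS_plus, !RS_scal. reflexivity. }
  rewrite H, RS_plus. rewrite (RS_rmul c), (RS_rmul s). ring.
Qed.

Lemma square_sym (g : nat -> nat -> R) M :
  (forall k l, g k l = g l k) ->
  RS (fun k => RS (fun l => g k l) 0 M) 0 M =
  RS (fun k => g k k) 0 M + 2 * RS (fun k => RS (fun l => g k l) 0 k) 0 M.
Proof.
  intros Hs. induction M. simpl; lra.
  assert (E: RS (fun k => RS (fun l => g k l) 0 (S M)) 0 (S M) =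
          RS (fun k => RS (fun l => g k l) 0 M) 0 M + RS (fun k => g k M) 0 M
          + RS (fun l => g M l) 0 (S M)).
  { change (RS (fun k => RS (fun l => g k l) 0 (S M)) 0 (S M)) with
      (RS (fun k => RS (fun l => g k l) 0 (S M)) 0 M + RS (fun l => g (0 + M)%nat l) 0 (S M)).
    simpl (0 + M)%nat. rewrite <- RS_plus. f_equal. }
  rewrite E, IHM.
  assert (RS (fun k => g k M) 0 M = RS (fun l => g M l) 0 M) by (apply RS_ext; intros; apply Hs).
  simpl RS. simpl (0+M)%nat. lra.
Qed.

Lemma sq_diag (g : nat -> nat -> R) M :
  (forall k l, g k l = g l k) ->
  RS (fun k => RS (fun l => g k l) 0 M) 0 M =
  RS (fun k => g k k) 0 M + 2 * RS (fun d => RS (fun l => g (l + d)%nat l) 0 (M - d)) 1 (M - 1).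
Proof.
  intros Hs. rewrite square_sym by auto. f_equal. f_equal.
  rewrite <- (triangle (fun d l => g (l + d)%nat l)).
  apply RS_ext. intros k _. apply RS_ext. intros l Hl. f_equal. lia.
Qed.

Lemma telescope_cos u c a n :
  2 * sin (u / 2) * RS (fun l => cos (u * INR l + c)) a n =
  sin (u * INR (a + n) - u / 2 + c) - sin (u * INR a - u / 2 + c).
Proof.
  rewrite <- RS_scal.
  rewrite (RS_ext _ (fun l => (- sin (u * INR l - u/2 + c)) - (- sin (u * INR (S l) - u/2 + c)))).
  rewrite RS_telescope. lra.
  intros k _. rewrite S_INR.
  replace (u * (INR k + 1) - u / 2 + c) with ((u * INR k + c) + u/2) by lra.
  replace (u * INR k - u / 2 + c) with ((u * INR k + c) - u/2) by lra.
  rewrite sin_plus, sin_minus. ring.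
Qed.

Lemma cos_sum_sin_bound u c a n :
  Rabs (RS (fun l => cos (u * INR l + c)) a n) * Rabs (sin (u / 2)) <= 1.
Proof.
  assert (H := telescope_cos u c a n).
  assert (Rabs (2 * sin (u / 2) * RS (fun l => cos (u * INR l + c)) a n) <= 2).
  { rewrite H. eapply Rle_trans. apply Rabs_triang. rewrite Rabs_Ropp.
    pose proof (Rabs_le _ 1 (SIN_bound (u * INR (a + n) - u / 2 + c))) .
    pose proof (Rabs_le _ 1 (SIN_bound (u * INR a - u / 2 + c))). lra. }
  rewrite !Rabs_mult in H0. rewrite (Rabs_right 2) in H0 by lra. nra.
Qed.

Lemma RS_abs_le1 f a n : (forall k, Rabs (f k) <= 1) -> Rabs (RS f a n) <= INR n.
Proof.
  intros H. eapply Rle_trans. apply RS_abs.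
  rewrite <- (Rmult_1_r (INR n)), <- (RS_const 1 a n). apply RS_le; auto.
Qed.

Definition Iinner x a M d := RS (fun l => cos (4 * PI * INR d * x * INR l + 2 * PI * (INR d)^2 * x)) a (M - d).

Lemma weyl_identity x a M :
  (Sc x a M)^2 + (Ss x a M)^2 = INR M + 2 * RS (fun d => Iinner x a M d) 1 (M - 1).
Proof.
  unfold Sc, Ss. rewrite sq_sum_gen.
  rewrite (RS_shift _ a M).
  rewrite (RS_ext _ (fun k => RS (fun l => cos (theta x (a + k) - theta x (a + l))) 0 M)).
  2:{ intros k _. rewrite RS_shift. apply RS_ext. intros l _. rewrite cos_minus. ring. }
  rewrite (sq_diag (fun k l => cos (theta x (a + k) - theta x (a + l)))).
  2:{ intros. rewrite <- cos_neg. f_equal. ring. }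
  rewrite (RS_ext (fun k => cos (theta x (a+k) - theta x (a+k))) (fun _ => 1)).
  2:{ intros. rewrite Rminus_diag. apply cos_0. }
  rewrite RS_const. f_equal. ring. f_equal.
  apply RS_ext. intros d _. unfold Iinner. rewrite (RS_shift _ a). apply RS_ext. intros l _.
  f_equal. unfold theta. rewrite !plus_INR. ring.
Qed.

Lemma weyl_bound x a M (W : nat -> R) :
  (forall d, (1 <= d < M)%nat -> Rabs (Iinner x a M d) <= W d) ->
  (Sc x a M)^2 + (Ss x a M)^2 <= INR M + 2 * RS W 1 (M - 1).
Proof.
  intros HW. rewrite weyl_identity.
  assert (RS (fun d => Iinner x a M d) 1 (M - 1) <= RS W 1 (M - 1)).
  { apply RS_le. intros d Hd. eapply Rle_trans. apply Rle_abs. apply HW. lia. }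
  lra.
Qed.

Lemma Rabs_bnd x a : Rabs x <= a -> - a <= x <= a.
Proof. unfold Rabs; destruct (Rcase_abs x); lra. Qed.

Lemma PI_gt3 : 3 < PI.
Proof. pose proof PI2_3_2. lra. Qed.

Lemma sin_ge_third a : 0 <= a <= 2 -> a / 3 <= sin a.
Proof.
  intros Ha. assert (a <= PI) by (pose proof PI_gt3; lra).
  destruct (SIN a) as [H1 _]; try lra.
  unfold sin_lb, sin_approx, sin_term in H1. cbn [sum_f_R0] in H1.
  rewrite !INR_IZR_INZ in H1.
  change (Z.of_nat (fact (2*0+1))) with 1%Z in H1.
  change (Z.of_nat (fact (2*1+1))) with 6%Z in H1.
  change (Z.of_nat (fact (2*2+1))) with 120%Z in H1.
  change (Z.of_nat (fact (2*3+1))) with 5040%Z in H1.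
  simpl pow in H1.
  set (b := a*a) in *.
  assert (Hb: 0 <= b <= 4) by (unfold b; nra).
  assert (Hp: 0 <= 2/3 - b/6 + b*b/120 - b*b*b/5040).
  { assert (b*b*b <= 4 * (b*b)) by nra. nra. }
  assert (E: a * 1 / 1 + -1 * 1 * (a * (a * (a * 1)) / 6) +
    -1 * (-1 * 1) * (a * (a * (a * (a * (a * 1)))) / 120) +
    -1 * (-1 * (-1 * 1)) * (a * (a * (a * (a * (a * (a * (a * 1)))))) / 5040) - a/3
    = a * (2/3 - b/6 + b*b/120 - b*b*b/5040)) by (unfold b; field).
  assert (0 <= a * (2/3 - b/6 + b*b/120 - b*b*b/5040)) by (apply Rmult_le_pos; lra).
  lra.
Qed.

Lemma sin_lower s y : 0 < s <= 1/2 -> s <= y <= 1 - s -> s <= sin (PI * y).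
Proof.
  intros Hs Hy. pose proof PI_gt3. pose proof PI_4.
  assert (Hb: forall z, s <= z <= 1/2 -> s <= sin (PI * z)).
  { intros z Hz. assert (sin (PI * s) <= sin (PI * z)).
    { apply sin_incr_1; nra. }
    assert (PI * s / 3 <= sin (PI * s)) by (apply sin_ge_third; nra). nra. }
  destruct (Rle_dec y (1/2)). apply Hb; lra.
  replace (PI * y) with (PI - PI * (1 - y)) by ring. rewrite sin_PI_x. apply Hb; lra.
Qed.

Lemma sin_shift_nat n z : Rabs (sin (INR n * PI + z)) = Rabs (sin z).
Proof.
  rewrite sin_plus. assert (sin (INR n * PI) = 0).
  { apply sin_eq_0_1. exists (Z.of_nat n). rewrite <- INR_IZR_INZ. reflexivity. }
  rewrite H. rewrite Rmult_0_l, Rplus_0_l.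
  assert ((cos (INR n * PI))^2 = 1).
  { pose proof (sin2_cos2 (INR n * PI)). rewrite H in H0. unfold Rsqr in H0. simpl. lra. }
  rewrite Rabs_mult. assert (Rabs (cos (INR n * PI)) = 1).
  { assert (Rabs (cos (INR n * PI)) ^2 = 1). rewrite RPow_abs. rewrite H0. apply Rabs_R1.
    pose proof (Rabs_pos (cos (INR n * PI))). nra. }
  rewrite H1. ring.
Qed.

Definition hb (n : nat) : R := if (n <=? 2)%nat then 1 else 1 / (INR n - 2).
Definition Gq (q m : nat) : R := INR q * (hb m + hb (q - m)).

Lemma hb_nonneg n : 0 <= hb n.
Proof.
  unfold hb. destruct (Nat.leb_spec n 2). lra.
  assert (INR n >= 3). { replace 3 with (INR 3) by (simpl; lra). apply Rle_ge, le_INR. lia. }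
  apply Rlt_le. apply Rdiv_lt_0_compat; lra.
Qed.

Lemma Iinner_bound (p q a M d : nat) (x : R) :
  (1 <= q)%nat -> Rabs (x - INR p / INR q) <= 1 / (INR q)^2 ->
  (M <= q)%nat -> (1 <= d < M)%nat ->
  Rabs (Iinner x a M d) <= Gq q ((2 * d * p) mod q).
Proof.
  intros Hq Hx HM Hd.
  set (I := Iinner x a M d).
  assert (Qpos: 1 <= INR q) by (replace 1 with (INR 1) by reflexivity; apply le_INR; lia).
  assert (HI1: Rabs I <= INR q).
  { unfold I, Iinner. eapply Rle_trans. apply RS_abs_le1. intros; apply Rabs_le; apply COS_bound.
    apply le_INR. lia. }
  assert (HI2: Rabs I * Rabs (sin (2 * PI * INR d * x)) <= 1).
  { unfold I, Iinner.
    replace (2 * PI * INR d * x) with ((4 * PI * INR d * x) / 2) by field.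
    apply (cos_sum_sin_bound (4 * PI * INR d * x) (2 * PI * (INR d)^2 * x)). }
  set (m := ((2 * d * p) mod q)%nat).
  set (n0 := ((2 * d * p) / q)%nat).
  assert (Hdiv: (2 * d * p = q * n0 + m)%nat) by (apply Nat.div_mod_eq).
  assert (Hmq: (m < q)%nat) by (apply Nat.mod_upper_bound; lia).
  pose proof (hb_nonneg m). pose proof (hb_nonneg (q - m)).
  destruct (Nat.leb_spec (Nat.min m (q - m)) 2) as [Hj|Hj].
  -
    assert (1 <= hb m + hb (q - m)).
    { destruct (Nat.min_spec m (q - m)) as [[_ E]|[_ E]]; rewrite E in Hj.
      + assert (hb m = 1) by (unfold hb; destruct (Nat.leb_spec m 2); try lia; lra). lra.
      + assert (hb (q-m) = 1) by (unfold hb; destruct (Nat.leb_spec (q-m) 2); try lia; lra). lra. }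
    unfold Gq. fold I. nra.
  - set (j := Nat.min m (q - m)) in *.
    assert (Hjm: (j <= m)%nat) by apply Nat.le_min_l.
    assert (Hjq: (j <= q - m)%nat) by apply Nat.le_min_r.
    set (h := x - INR p / INR q).
    set (y := INR m / INR q + 2 * INR d * h).
    assert (Ey: 2 * PI * INR d * x = INR n0 * PI + PI * y).
    { unfold y, h. apply (f_equal INR) in Hdiv. rewrite !mult_INR, plus_INR, mult_INR in Hdiv.
      assert (En: INR n0 = (2 * INR d * INR p - INR m) / INR q).
      { replace (INR 2) with 2 in Hdiv by (simpl; lra). rewrite Hdiv. field. lra. }
      rewrite En. field. lra. }
    assert (Hdh: Rabs (2 * INR d * h) <= 2 / INR q).
    { unfold h. rewrite Rabs_mult. rewrite (Rabs_right (2 * INR d)).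
      2:{ apply Rle_ge. apply Rmult_le_pos. lra. apply pos_INR. }
      assert (INR d <= INR q) by (apply le_INR; lia).
      apply Rle_trans with (2 * INR q * (1 / INR q ^ 2)).
      apply Rmult_le_compat; try lra. apply Rmult_le_pos; [lra| apply pos_INR]. apply Rabs_pos.
      apply Req_le. field. lra. }
    assert (HjR: 3 <= INR j) by (replace 3 with (INR 3) by (simpl; lra); apply le_INR; lia).
    assert (HjmR: INR j <= INR m) by (apply le_INR; lia).
    assert (HjqR: INR j <= INR q - INR m) by (rewrite <- minus_INR by lia; apply le_INR; lia).
    set (s := (INR j - 2) / INR q).
    assert (Hs: 0 < s <= 1/2).
    { unfold s. split. apply Rdiv_lt_0_compat; lra.
      apply Rmult_le_reg_r with (INR q). lra. field_simplify; lra. }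
    assert (Hys: s <= y <= 1 - s).
    { unfold s, y. apply Rabs_bnd in Hdh. split.
      - apply Rle_trans with (INR m / INR q - 2 / INR q). apply Rmult_le_reg_r with (INR q). lra.
        field_simplify; lra. lra.
      - apply Rle_trans with (INR m / INR q + 2 / INR q). lra. apply Rmult_le_reg_r with (INR q). lra.
        field_simplify; lra. }
    assert (Hsin: s <= Rabs (sin (2 * PI * INR d * x))).
    { rewrite Ey, sin_shift_nat. pose proof (sin_lower s y Hs Hys). rewrite Rabs_right; lra. }
    assert (HIs: Rabs I <= / s).
    { apply Rmult_le_reg_r with s. lra. rewrite Rinv_l by lra. pose proof (Rabs_pos I). nra. }
    assert (Eh: / s = INR q * hb j).
    { unfold hb. destruct (Nat.leb_spec j 2); try lia. unfold s. field. split; lra. }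
    assert (hb j <= hb m + hb (q - m)).
    { unfold j. destruct (Nat.min_spec m (q - m)) as [[_ E]|[_ E]]; rewrite E; lra. }
    unfold Gq. fold I. rewrite Eh in HIs. nra.
Qed.

Lemma RS_delta (F : nat -> R) v q : (v < q)%nat ->
  RS (fun m => if Nat.eqb m v then F m else 0) 0 q = F v.
Proof.
  induction q; intros Hv. lia.
  simpl RS. destruct (Nat.eq_dec v q).
  - subst. rewrite Nat.eqb_refl.
    rewrite (RS_ext _ (fun _ => 0)). rewrite RS_const. lra.
    intros k Hk. destruct (Nat.eqb_spec k q); try lia. reflexivity.
  - rewrite IHq by lia. destruct (Nat.eqb_spec q v); try lia. lra.
Qed.

Fixpoint cnt (g : nat -> nat) (a n m : nat) : R :=
  match n with O => 0 | S n' => if Nat.eqb (g (a + n')%nat) m then 1 else cnt g a n' m end.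

Lemma cnt_01 g a n m : 0 <= cnt g a n m <= 1.
Proof. induction n; simpl. lra. destruct (Nat.eqb _ _); lra. Qed.

Lemma cnt_zero g a n m : (forall i, (i < n)%nat -> g (a + i)%nat <> m) -> cnt g a n m = 0.
Proof.
  induction n; intros H; simpl; auto.
  destruct (Nat.eqb_spec (g (a+n)%nat) m). exfalso; apply (H n); auto. apply IHn; intros; apply H; lia.
Qed.

Lemma inj_sum_le (F : nat -> R) (g : nat -> nat) a n q :
  (forall m, 0 <= F m) ->
  (forall i, (i < n)%nat -> (g (a + i) < q)%nat) ->
  (forall i j, (i < n)%nat -> (j < n)%nat -> g (a + i)%nat = g (a + j)%nat -> i = j) ->
  RS (fun k => F (g k)) a n <= RS F 0 q.
Proof.
  intros HF Hr Hinj.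
  assert (E: RS (fun k => F (g k)) a n = RS (fun m => F m * cnt g a n m) 0 q).
  { clear HF. induction n.
    - simpl. rewrite (RS_ext _ (fun _ => 0)). rewrite RS_const. lra. intros; simpl; lra.
    - simpl RS at 1. rewrite IHn.
      2:{ intros; apply Hr; lia. }
      2:{ intros; apply Hinj; lia. }
      assert (RS (fun m => F m * cnt g a (S n) m) 0 q =
              RS (fun m => F m * cnt g a n m) 0 q +
              RS (fun m => if Nat.eqb m (g (a + n)%nat) then F m else 0) 0 q).
      { rewrite <- RS_plus. apply RS_ext. intros m _. simpl.
        destruct (Nat.eqb_spec (g (a+n)%nat) m); destruct (Nat.eqb_spec m (g (a+n)%nat)); try congruence.
        - subst. rewrite cnt_zero. lra. intros i Hi E. apply Hinj in E; lia.
        - lra. }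
      rewrite H, RS_delta. lra. apply Hr; lia. }
  rewrite E. apply RS_le. intros m _. pose proof (cnt_01 g a n m). pose proof (HF m). nra.
Qed.

Lemma mod_inj (p q d1 d2 : nat) : (1 <= q)%nat -> Nat.gcd q p = 1%nat ->
  (d1 < d2)%nat -> (2 * (d2 - d1) < q)%nat ->
  ((2 * d1 * p) mod q)%nat <> ((2 * d2 * p) mod q)%nat.
Proof.
  intros Hq Hg Hd Hlt E.
  pose proof (Nat.div_mod_eq (2 * d1 * p) q) as E1.
  pose proof (Nat.div_mod_eq (2 * d2 * p) q) as E2.
  assert (Hc: (2 * d2 * p = 2 * d1 * p + (2 * (d2 - d1)) * p)%nat).
  { replace d2 with (d1 + (d2 - d1))%nat at 1 by lia. ring. }
  assert (Nat.divide q (p * (2 * (d2 - d1)))).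
  { exists ((2 * d2 * p) / q - (2 * d1 * p) / q)%nat.
    rewrite Nat.mul_sub_distr_r. rewrite E in E1.
    rewrite (Nat.mul_comm p), (Nat.mul_comm (_ / q)), (Nat.mul_comm (_ / q)).
    revert E1 E2 Hc. generalize (2 * d1 * p)%nat (2 * d2 * p)%nat (2 * (d2 - d1) * p)%nat
      (q * (2 * d1 * p / q))%nat (q * (2 * d2 * p / q))%nat ((2 * d2 * p) mod q)%nat. intros. lia. }
  apply Nat.gauss in H; auto.
  apply Nat.divide_pos_le in H; lia.
Qed.

Lemma count_bound (p q M : nat) (F : nat -> R) :
  (1 <= q)%nat -> Nat.gcd q p = 1%nat -> (M <= q)%nat -> (forall m, 0 <= F m) ->
  RS (fun d => F ((2 * d * p) mod q)%nat) 1 (M - 1) <= 2 * RS F 0 q.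
Proof.
  intros Hq Hg HM HF.
  set (h := (q / 2)%nat).
  assert (Hh: (2 * h <= q /\ q <= 2 * h + 1)%nat).
  { pose proof (Nat.div_mod_eq q 2). pose proof (Nat.mod_upper_bound q 2). unfold h. lia. }
  set (g := fun d => ((2 * d * p) mod q)%nat).
  assert (Hr: forall d, (g d < q)%nat) by (intros; apply Nat.mod_upper_bound; lia).
  destruct (Nat.le_gt_cases (M - 1) h) as [Hle|Hgt].
  - eapply Rle_trans. apply (inj_sum_le F g 1 (M - 1) q); auto.
    + intros i j Hi Hj E. destruct (Nat.lt_total i j) as [Hij|[Hij|Hij]]; auto.
      * exfalso. apply (mod_inj p q (1+i) (1+j)); auto; lia.
      * exfalso. apply (mod_inj p q (1+j) (1+i)); auto; lia.
    + assert (0 <= RS F 0 q) by (apply RS_nonneg; auto). lra.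
  - replace (M - 1)%nat with (h + (M - 1 - h))%nat by lia. rewrite RS_split.
    assert (RS (fun d => F (g d)) 1 h <= RS F 0 q).
    { apply (inj_sum_le F g 1 h q); auto.
      intros i j Hi Hj E. destruct (Nat.lt_total i j) as [Hij|[Hij|Hij]]; auto.
      * exfalso. apply (mod_inj p q (1+i) (1+j)); auto; lia.
      * exfalso. apply (mod_inj p q (1+j) (1+i)); auto; lia. }
    assert (RS (fun d => F (g d)) (1 + h) (M - 1 - h) <= RS F 0 q).
    { apply (inj_sum_le F g (1 + h) (M - 1 - h) q); auto.
      intros i j Hi Hj E. destruct (Nat.lt_total i j) as [Hij|[Hij|Hij]]; auto.
      * exfalso. apply (mod_inj p q (1+h+i) (1+h+j)); auto; lia.
      * exfalso. apply (mod_inj p q (1+h+j) (1+h+i)); auto; lia. }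
    unfold g in *. lra.
Qed.

Lemma INR_ge1 n : (1 <= n)%nat -> 1 <= INR n.
Proof. intros; replace 1 with (INR 1) by reflexivity; apply le_INR; lia. Qed.

Lemma ln_step n : (1 <= n)%nat -> 1 / (INR n + 1) <= ln (INR n + 1) - ln (INR n).
Proof.
  intros Hn. pose proof (INR_ge1 n Hn).
  set (z := 1 / (INR n + 1)).
  assert (Hz: 0 < z < 1). { unfold z. split. apply Rdiv_lt_0_compat; lra.
    apply Rmult_lt_reg_r with (INR n + 1). lra. field_simplify; lra. }
  assert (H1: 1 - z < exp (- z)) by (pose proof (exp_ineq1 (- z)); lra).
  assert (H2: exp z * (1 - z) <= 1).
  { assert (exp z * exp (- z) = 1) by (rewrite <- exp_plus; replace (z + - z) with 0 by ring; apply exp_0).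
    pose proof (exp_pos z). nra. }
  assert (E: 1 - z = INR n / (INR n + 1)) by (unfold z; field; lra).
  assert (Hexp: exp z <= (INR n + 1) / INR n).
  { rewrite E in H2. apply Rmult_le_reg_r with (INR n / (INR n + 1)).
    apply Rdiv_lt_0_compat; lra. replace ((INR n + 1) / INR n * (INR n / (INR n + 1))) with 1 by (field; lra). lra. }
  replace (ln (INR n + 1) - ln (INR n)) with (ln ((INR n + 1) / INR n)).
  2:{ unfold Rdiv. rewrite ln_mult, ln_Rinv; try lra. apply Rinv_0_lt_compat; lra. }
  rewrite <- (ln_exp z). destruct (Rle_lt_or_eq_dec _ _ Hexp) as [Hl|He].
  - left. apply ln_increasing. apply exp_pos. auto.
  - rewrite He. lra.
Qed.

Lemma harmonic n : (1 <= n)%nat -> RS (fun k => 1 / (INR k + 1)) 0 n <= 1 + ln (INR n).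
Proof.
  induction n; intros Hn. lia.
  destruct n. simpl. rewrite ln_1. lra.
  specialize (IHn ltac:(lia)).
  change (RS (fun k => 1 / (INR k + 1)) 0 (S (S n))) with
    (RS (fun k => 1 / (INR k + 1)) 0 (S n) + 1 / (INR (0 + S n)%nat + 1)).
  replace (0 + S n)%nat with (S n) by lia.
  pose proof (ln_step (S n) ltac:(lia)). rewrite <- (S_INR (S n)) in *. lra.
Qed.

Lemma hb_le n : hb n <= 4 / (INR n + 1).
Proof.
  unfold hb. pose proof (pos_INR n). destruct (Nat.leb_spec n 2).
  - assert (INR n <= 2) by (replace 2 with (INR 2) by (simpl; lra); apply le_INR; lia).
    apply Rmult_le_reg_r with (INR n + 1). lra. field_simplify; lra.
  - assert (3 <= INR n) by (replace 3 with (INR 3) by (simpl; lra); apply le_INR; lia).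
    apply Rmult_le_reg_r with ((INR n + 1) * (INR n - 2)). nra. field_simplify; nra.
Qed.

Lemma Gq_sum q : (1 <= q)%nat -> RS (Gq q) 0 q <= 8 * INR q * (1 + ln (INR q)).
Proof.
  intros Hq. unfold Gq. rewrite RS_scal, RS_plus.
  assert (A1: RS hb 0 q <= 4 * (1 + ln (INR q))).
  { eapply Rle_trans. apply (RS_le _ (fun k => 4 * (1 / (INR k + 1)))). intros; rewrite hb_le; lra.
    rewrite RS_scal. pose proof (harmonic q Hq). lra. }
  assert (A2: RS (fun m => hb (q - m)%nat) 0 q <= 4 * (1 + ln (INR q))).
  { rewrite RS_rev. eapply Rle_trans. apply (RS_le _ (fun k => 4 * (1 / (INR k + 1)))).
    intros k Hk. replace (q - (q - 1 - k))%nat with (S k) by lia. rewrite hb_le. rewrite S_INR.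
    pose proof (pos_INR k). apply Rmult_le_compat_l. lra.
    apply Rmult_le_reg_r with ((INR k + 1 + 1) * (INR k + 1)). nra. field_simplify; lra.
    rewrite RS_scal. pose proof (harmonic q Hq). lra. }
  pose proof (INR_ge1 q Hq). nra.
Qed.

Lemma ln_nat_nonneg q : (1 <= q)%nat -> 0 <= ln (INR q).
Proof.
  intros Hq. pose proof (INR_ge1 q Hq). rewrite <- ln_1.
  destruct (Rle_lt_or_eq_dec _ _ H). left; apply ln_increasing; lra. rewrite e; lra.
Qed.

Definition Bq (q : nat) : R := sqrt (33 * INR q * (1 + ln (INR q))).

Lemma block_sq (p q a M : nat) (x : R) :
  (1 <= q)%nat -> Nat.gcd q p = 1%nat -> Rabs (x - INR p / INR q) <= 1 / (INR q)^2 ->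
  (M <= q)%nat ->
  (Sc x a M)^2 + (Ss x a M)^2 <= 33 * INR q * (1 + ln (INR q)).
Proof.
  intros Hq Hg Hx HM.
  eapply Rle_trans. apply (weyl_bound x a M (fun d => Gq q ((2 * d * p) mod q)%nat)).
  { intros d Hd. apply Iinner_bound; auto. }
  pose proof (count_bound p q M (Gq q) Hq Hg HM).
  assert (forall m, 0 <= Gq q m).
  { intros m. unfold Gq. pose proof (hb_nonneg m). pose proof (hb_nonneg (q - m)). pose proof (pos_INR q). nra. }
  specialize (H H0). pose proof (Gq_sum q Hq).
  assert (INR M <= INR q) by (apply le_INR; auto).
  pose proof (ln_nat_nonneg q Hq). pose proof (INR_ge1 q Hq). nra.
Qed.

Lemma block_bound (p q a M : nat) (x : R) :
  (1 <= q)%nat -> Nat.gcd q p = 1%nat -> Rabs (x - INR p / INR q) <= 1 / (INR q)^2 ->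
  (M <= q)%nat ->
  Rabs (Sc x a M) <= Bq q /\ Rabs (Ss x a M) <= Bq q.
Proof.
  intros. pose proof (block_sq p q a M x H H0 H1 H2). unfold Bq.
  split; rewrite <- sqrt_Rsqr_abs; apply sqrt_le_1_alt; unfold Rsqr;
  pose proof (pow2_ge_0 (Sc x a M)); pose proof (pow2_ge_0 (Ss x a M)); simpl in *; lra.
Qed.

Lemma mvt_bound (f f' : R -> R) a b K : a <= b ->
  (forall c, a <= c <= b -> derivable_pt_lim f c (f' c)) ->
  (forall c, a <= c <= b -> Rabs (f' c) <= K) ->
  Rabs (f b - f a) <= K * (b - a).
Proof.
  intros Hab Hd HK. destruct (Rle_lt_or_eq_dec _ _ Hab) as [Hl|He].
  - destruct (MVT_cor2 f f' a b Hl Hd) as [c [E Hc]]. rewrite E.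
    rewrite Rabs_mult. rewrite (Rabs_right (b - a)) by lra.
    apply Rmult_le_compat_r. lra. apply HK; lra.
  - subst. rewrite Rminus_diag, Rabs_R0. assert (0 <= K). { specialize (HK b). pose proof (Rabs_pos (f' b)). lra. } lra.
Qed.

Lemma abs_sin_le z : Rabs (sin z) <= Rabs z.
Proof.
  assert (forall z, 0 <= z -> Rabs (sin z) <= z).
  { intros w Hw. pose proof (mvt_bound sin cos 0 w 1 Hw).
    rewrite sin_0, Rminus_0_r, Rminus_0_r, Rmult_1_l in H. apply H.
    intros; apply derivable_pt_lim_sin. intros; apply Rabs_le; apply COS_bound. }
  destruct (Rle_dec 0 z). rewrite (Rabs_right z) by lra. auto.
  rewrite <- (Ropp_involutive z). rewrite sin_neg, !Rabs_Ropp. rewrite (Rabs_left z) by lra. apply H. lra.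
Qed.

Lemma one_minus_cos z : 0 <= 1 - cos z <= z^2 / 2.
Proof.
  pose proof (COS_bound z). split. lra.
  replace z with (2 * (z/2)) at 1 by field. rewrite cos_2a_sin.
  pose proof (abs_sin_le (z/2)). 
  assert (sin (z/2) ^ 2 <= (z/2) ^ 2).
  { rewrite <- (pow2_abs (sin (z/2))), <- (pow2_abs (z/2)). apply pow_incr. split; [apply Rabs_pos|auto]. }
  simpl in H1. nra.
Qed.

Lemma g_bound z : Rabs (z * cos z - sin z) <= z^2.
Proof.
  assert (forall z, 0 <= z -> Rabs (z * cos z - sin z) <= z^2).
  { intros w Hw. pose proof (mvt_bound (fun z => z * cos z - sin z) (fun z => - (z * sin z)) 0 w w Hw).
    cbv beta in H. rewrite sin_0 in H.
    replace (w * cos w - sin w) with (w * cos w - sin w - (0 * cos 0 - 0)) by ring.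
    replace (w^2) with (w * (w - 0)) by ring. apply H.
    - intros c _. apply is_derive_Reals. auto_derive. auto. ring.
    - intros c Hc. rewrite Rabs_Ropp, Rabs_mult. rewrite (Rabs_right c) by lra.
      pose proof (Rabs_le _ 1 (SIN_bound c)). nra. }
  destruct (Rle_dec 0 z). auto.
  replace (z * cos z - sin z) with (- ((-z) * cos (-z) - sin (-z))).
  rewrite Rabs_Ropp. replace (z^2) with ((-z)^2) by ring. apply H. lra.
  rewrite cos_neg, sin_neg. ring.
Qed.

Lemma U_lip c y1 y2 : 0 < y1 <= y2 ->
  Rabs ((cos (c * y2) - 1) / y2 - (cos (c * y1) - 1) / y1) <= 3/2 * c^2 * (y2 - y1).
Proof.
  intros Hy. apply (mvt_bound (fun y => (cos (c * y) - 1) / y)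
    (fun y => (- c * sin (c * y) * y - (cos (c * y) - 1)) / y^2)). lra.
  - intros y Hy'. apply is_derive_Reals. auto_derive. lra. field. lra.
  - intros y Hy'. assert (0 < y) by lra.
    rewrite Rabs_div by (apply pow_nonzero; lra). rewrite (Rabs_right (y^2)) by (apply Rle_ge, pow2_ge_0).
    apply Rmult_le_reg_r with (y^2). apply pow_lt; lra. unfold Rdiv. rewrite Rmult_assoc, Rinv_l by (apply pow_nonzero; lra).
    rewrite Rmult_1_r. eapply Rle_trans. apply Rabs_triang. rewrite Rabs_Ropp.
    pose proof (one_minus_cos (c*y)). rewrite Rabs_minus_sym. rewrite (Rabs_right (1 - cos (c*y))) by lra.
    replace (- c * sin (c * y) * y) with (- (c * y) * sin (c * y)) by ring.
    rewrite Rabs_mult, Rabs_Ropp. pose proof (abs_sin_le (c * y)).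
    pose proof (Rabs_pos (c*y)). pose proof (Rabs_pos (sin (c*y))).
    assert (Rabs (c * y) * Rabs (sin (c * y)) <= (c*y)^2).
    { rewrite <- pow2_abs. simpl. nra. }
    simpl in *. nra.
Qed.

Lemma V_lip c y1 y2 : 0 < y1 <= y2 ->
  Rabs (sin (c * y2) / y2 - sin (c * y1) / y1) <= c^2 * (y2 - y1).
Proof.
  intros Hy. apply (mvt_bound (fun y => sin (c * y) / y)
    (fun y => ((c * y) * cos (c * y) - sin (c * y)) / y^2)). lra.
  - intros y Hy'. apply is_derive_Reals. auto_derive. lra. field. lra.
  - intros y Hy'. assert (0 < y) by lra.
    rewrite Rabs_div by (apply pow_nonzero; lra). rewrite (Rabs_right (y^2)) by (apply Rle_ge, pow2_ge_0).
    apply Rmult_le_reg_r with (y^2). apply pow_lt; lra. unfold Rdiv. rewrite Rmult_assoc, Rinv_l by (apply pow_nonzero; lra).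
    rewrite Rmult_1_r. eapply Rle_trans. apply g_bound. right. ring.
Qed.

Definition good (c : nat -> R) (q : nat) (B : R) :=
  forall a L, Rabs (RS c a L) <= (INR L / INR q + 1) * B.

Lemma growth (c : nat -> R) q B : (1 <= q)%nat -> 0 <= B ->
  (forall a L, (L <= q)%nat -> Rabs (RS c a L) <= B) -> good c q B.
Proof.
  intros Hq HB Hb a L. revert a. induction L as [L IH] using lt_wf_ind. intros a.
  pose proof (INR_ge1 q Hq). pose proof (pos_INR L).
  destruct (Nat.le_gt_cases L q).
  - eapply Rle_trans. apply Hb; auto. assert (0 <= INR L / INR q) by (apply Rdiv_le_0_compat; lra). nra.
  - replace L with (q + (L - q))%nat by lia. rewrite RS_split.
    eapply Rle_trans. apply Rabs_triang.
    pose proof (Hb a q (le_n q)). pose proof (IH (L - q)%nat ltac:(lia) (a + q)%nat).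
    rewrite minus_INR in H3 by lia. rewrite plus_INR, minus_INR by lia.
    replace ((INR q + (INR L - INR q)) / INR q + 1) with (1 + ((INR L - INR q) / INR q + 1)) by (field; lra).
    lra.
Qed.

Definition w2 (k : nat) : R := 1 / (INR k)^2.

Lemma tail_bound (c : nat -> R) q B n : (1 <= q)%nat -> 0 <= B -> good c q B ->
  Rabs (RS (fun k => c k * w2 k) (q + 1) n) <= 3 * B / (INR q)^2.
Proof.
  intros Hq HB Hg. pose proof (INR_ge1 q Hq) as Q1.
  assert (Q2: 0 < (INR q)^2) by (apply pow_lt; lra).
  destruct n.
  - simpl. rewrite Rabs_R0. apply Rdiv_le_0_compat; lra.
  - eapply Rle_trans. apply (abel_bound c w2 (q+1) n (fun j => (INR j / INR q + 1) * B)).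
    { intros j _. apply Hg. }
    assert (T1: (INR (S n) / INR q + 1) * B * Rabs (w2 (q + 1 + n)%nat) <= B / (INR q)^2).
    { unfold w2. rewrite !plus_INR, S_INR. simpl (INR 1). pose proof (pos_INR n).
      set (K := INR q + 1 + INR n).
      rewrite Rabs_right.
      2:{ apply Rle_ge. apply Rdiv_le_0_compat. lra. apply pow_lt; unfold K; lra. }
      replace ((INR n + 1) / INR q + 1) with (K / INR q) by (unfold K; field; lra).
      replace (K / INR q * B * (1 / K ^ 2)) with (B / (INR q * K)) by (field; unfold K; lra).
      apply Rmult_le_reg_r with ((INR q)^2 * K). unfold K; nra.
      field_simplify; try (unfold K; lra). unfold K. nra. }
    assert (T2: forall k, (INR (S k) / INR q + 1) * B * Rabs (w2 (q + 1 + k)%nat - w2 (q + 1 + S k)%nat)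
              <= 2 * B / INR q * (1 / INR (q + 1 + k) - 1 / INR (q + 1 + S k))).
    { intros k. unfold w2. pose proof (pos_INR k).
      set (K := INR q + 1 + INR k).
      replace (INR (q + 1 + k)) with K by (unfold K; rewrite !plus_INR; change (INR 1) with 1; ring).
      replace (INR (q + 1 + S k)) with (K + 1) by (unfold K; rewrite !plus_INR, !S_INR, INR_0; ring).
      rewrite S_INR.
      replace ((INR k + 1) / INR q + 1) with (K / INR q) by (unfold K; field; lra).
      assert (1 <= K) by (unfold K; lra).
      replace (1 / K ^ 2 - 1 / (K + 1) ^ 2) with ((2 * K + 1) / (K^2 * (K+1)^2)) by (field; lra).
      rewrite Rabs_right.
      2:{ apply Rle_ge. apply Rdiv_le_0_compat. lra. apply Rmult_lt_0_compat; apply pow_lt; lra. }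
      replace (1 / K - 1 / (K + 1)) with (1 / (K * (K + 1))) by (field; lra).
      replace (K / INR q * B * ((2 * K + 1) / (K ^ 2 * (K + 1) ^ 2))) with
        (B / INR q * ((2 * K + 1) / (K * (K + 1) ^ 2))) by (field; lra).
      replace (2 * B / INR q * (1 / (K * (K + 1)))) with (B / INR q * (2 / (K * (K+1)))) by (field; lra).
      apply Rmult_le_compat_l. apply Rdiv_le_0_compat; lra.
      apply Rmult_le_reg_r with (K * (K+1)^2). nra. field_simplify; nra. }
    eapply Rle_trans. apply Rplus_le_compat. apply T1. apply RS_le. intros k _. apply T2.
    rewrite RS_scal.
    rewrite (RS_telescope (fun k => 1 / INR (q + 1 + k))). simpl (0 + n)%nat.
    rewrite Nat.add_0_r.
    assert (0 <= 1 / INR (q + 1 + n)). { apply Rdiv_le_0_compat. lra. apply lt_0_INR. lia. }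
    assert (1 / INR (q + 1) <= 1 / INR q).
    { rewrite plus_INR. simpl (INR 1). apply Rmult_le_reg_r with (INR q * (INR q + 1)). nra. field_simplify; lra. }
    assert (2 * B / INR q * (1 / INR (q+1) - 1 / INR (q + 1 + n)) <= 2 * B / (INR q)^2).
    { replace (2 * B / (INR q)^2) with (2 * B / INR q * (1 / INR q)) by (field; lra).
      apply Rmult_le_compat_l. apply Rdiv_le_0_compat; lra. lra. }
    replace (3 * B / INR q ^ 2) with (B / INR q ^ 2 + 2 * B / INR q ^ 2) by (field; lra). lra.
Qed.

Lemma head_abel (c b : nat -> R) q B : (1 <= q)%nat -> 0 <= B ->
  (forall j, (1 <= j <= q)%nat -> Rabs (RS c 1 j) <= B) ->
  Rabs (RS (fun k => c k * b k) 1 q) <=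
  B * Rabs (b q) + B * RS (fun k => Rabs (b (1 + k)%nat - b (1 + S k)%nat)) 0 (q - 1).
Proof.
  intros Hq HB Hc. replace q with (S (q - 1)) at 1 by lia.
  eapply Rle_trans. apply (abel_bound c b 1 (q - 1) (fun _ => B)).
  intros j Hj; apply Hc; lia.
  rewrite RS_scal. replace (1 + (q - 1))%nat with q by lia. lra.
Qed.

Lemma INR_1k k : INR (1 + k) = INR k + 1.
Proof. replace (1 + k)%nat with (S k) by lia. rewrite S_INR. ring. Qed.
Lemma INR_1Sk k : INR (1 + S k) = INR k + 2.
Proof. replace (1 + S k)%nat with (S (S k)) by lia. rewrite !S_INR. ring. Qed.

Definition Uf (h : R) (k : nat) := (cos (2 * PI * h * (INR k)^2) - 1) / (INR k)^2.
Definition Vf (h : R) (k : nat) := sin (2 * PI * h * (INR k)^2) / (INR k)^2.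

Lemma sumk_bound q (K : R) (f : nat -> R) : (1 <= q)%nat -> 0 <= K ->
  (forall k, (k < q - 1)%nat -> f k <= K * (2 * INR k + 3)) ->
  RS f 0 (q - 1) <= 3 * K * (INR q)^2.
Proof.
  intros Hq HK Hf. pose proof (INR_ge1 q Hq).
  eapply Rle_trans. apply (RS_le _ (fun _ => K * (3 * INR q))).
  { intros k Hk. eapply Rle_trans. apply Hf. lia. apply Rmult_le_compat_l. auto.
    assert (INR (k + 2) <= INR q) by (apply le_INR; lia).
    rewrite plus_INR in H0. simpl (INR 2) in H0. lra. }
  rewrite RS_const. rewrite minus_INR by lia. simpl (INR 1). nra.
Qed.

Lemma head_U (c : nat -> R) q B h : (1 <= q)%nat -> 0 <= B ->
  (forall j, (1 <= j <= q)%nat -> Rabs (RS c 1 j) <= B) ->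
  Rabs h <= 1 / (INR q)^2 ->
  Rabs (RS (fun k => c k * Uf h k) 1 q) <= 20 * PI^2 * B / (INR q)^2.
Proof.
  intros Hq HB Hc Hh. pose proof (INR_ge1 q Hq) as Q1.
  assert (Q2: 0 < (INR q)^2) by (apply pow_lt; lra).
  assert (Hc2: (2 * PI * h)^2 <= 4 * PI^2 / (INR q)^4).
  { replace ((2 * PI * h)^2) with (4 * PI^2 * (Rabs h)^2) by (rewrite pow2_abs; ring).
    replace (4 * PI^2 / (INR q)^4) with (4 * PI^2 * (1 / (INR q)^2)^2) by (field; lra).
    apply Rmult_le_compat_l. pose proof PI_gt3; nra. apply pow_incr. split. apply Rabs_pos. auto. }
  pose proof (head_abel c (Uf h) q B Hq HB Hc) as HA.
  assert (A1: Rabs (Uf h q) <= 2 * PI^2 / (INR q)^2).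
  { unfold Uf. pose proof (one_minus_cos (2 * PI * h * INR q ^ 2)).
    rewrite Rabs_div by lra. rewrite (Rabs_right (INR q ^ 2)) by lra.
    rewrite Rabs_minus_sym, Rabs_right by lra.
    apply Rmult_le_reg_r with ((INR q)^2). lra. field_simplify; try lra.
    assert (E: (2 * PI * h * INR q ^ 2) ^ 2 / 2 = (2 * PI * h)^2 * (INR q)^4 / 2) by field.
    rewrite E in H.
    assert ((2 * PI * h)^2 * (INR q)^4 <= 4 * PI^2).
    { apply Rmult_le_reg_r with (/ (INR q)^4). apply Rinv_0_lt_compat, pow_lt; lra.
      rewrite Rmult_assoc, Rinv_r by (apply pow_nonzero; lra). rewrite Rmult_1_r. exact Hc2. }
    lra. }
  assert (A2: RS (fun k => Rabs (Uf h (1 + k)%nat - Uf h (1 + S k)%nat)) 0 (q - 1)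
              <= 3 * (3/2 * (2 * PI * h)^2) * (INR q)^2).
  { apply sumk_bound; auto. pose proof (pow2_ge_0 (2*PI*h)). lra.
    intros k Hk. unfold Uf. rewrite Rabs_minus_sym.
    eapply Rle_trans. apply U_lip.
    rewrite INR_1Sk, INR_1k. pose proof (pos_INR k).
    split. apply pow_lt. lra. apply pow_incr. lra.
    right. rewrite INR_1Sk, INR_1k. field. }
  assert (3 * (3 / 2 * (2 * PI * h) ^ 2) * INR q ^ 2 <= 18 * PI^2 / (INR q)^2).
  { replace (18 * PI^2 / (INR q)^2) with (9/2 * (4 * PI^2 / (INR q)^4) * (INR q)^2) by (field; lra).
    apply Rmult_le_compat_r. lra. lra. }
  replace (20 * PI ^ 2 * B / INR q ^ 2) with (B * (2 * PI^2 / (INR q)^2) + B * (18 * PI^2 / (INR q)^2)) by (field; lra).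
  assert (B * Rabs (Uf h q) <= B * (2 * PI^2 / (INR q)^2)) by (apply Rmult_le_compat_l; lra).
  assert (B * RS (fun k => Rabs (Uf h (1 + k)%nat - Uf h (1 + S k)%nat)) 0 (q - 1) <= B * (18 * PI^2 / (INR q)^2))
    by (apply Rmult_le_compat_l; lra).
  lra.
Qed.

Lemma head_V (c : nat -> R) q B h : (1 <= q)%nat -> 0 <= B ->
  (forall j, (1 <= j <= q)%nat -> Rabs (RS c 1 j) <= B) ->
  Rabs h <= 1 / (INR q)^2 ->
  Rabs (RS (fun k => c k * Vf h k) 1 q) <= (2 * PI + 12 * PI^2) * B / (INR q)^2.
Proof.
  intros Hq HB Hc Hh. pose proof (INR_ge1 q Hq) as Q1.
  assert (Q2: 0 < (INR q)^2) by (apply pow_lt; lra).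
  pose proof PI_gt3.
  assert (Hc2: (2 * PI * h)^2 <= 4 * PI^2 / (INR q)^4).
  { replace ((2 * PI * h)^2) with (4 * PI^2 * (Rabs h)^2) by (rewrite pow2_abs; ring).
    replace (4 * PI^2 / (INR q)^4) with (4 * PI^2 * (1 / (INR q)^2)^2) by (field; lra).
    apply Rmult_le_compat_l. nra. apply pow_incr. split. apply Rabs_pos. auto. }
  pose proof (head_abel c (Vf h) q B Hq HB Hc) as HA.
  assert (A1: Rabs (Vf h q) <= 2 * PI / (INR q)^2).
  { unfold Vf. rewrite Rabs_div by lra. rewrite (Rabs_right (INR q ^ 2)) by lra.
    eapply Rle_trans. apply Rmult_le_compat_r. left; apply Rinv_0_lt_compat; lra. apply abs_sin_le.
    rewrite !Rabs_mult. rewrite (Rabs_right 2) by lra. rewrite (Rabs_right PI) by lra.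
    rewrite (Rabs_right (INR q ^ 2)) by lra.
    replace (2 * PI * Rabs h * INR q ^ 2 * / INR q ^ 2) with (2 * PI * Rabs h) by (field; lra).
    replace (2 * PI / INR q ^ 2) with (2 * PI * (1 / INR q ^ 2)) by (field; lra).
    apply Rmult_le_compat_l; lra. }
  assert (A2: RS (fun k => Rabs (Vf h (1 + k)%nat - Vf h (1 + S k)%nat)) 0 (q - 1)
              <= 3 * ((2 * PI * h)^2) * (INR q)^2).
  { apply sumk_bound; auto. apply pow2_ge_0.
    intros k Hk. unfold Vf. rewrite Rabs_minus_sym.
    eapply Rle_trans. apply V_lip.
    rewrite INR_1Sk, INR_1k. pose proof (pos_INR k).
    split. apply pow_lt. lra. apply pow_incr. lra.
    right. rewrite INR_1Sk, INR_1k. field. }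
  assert (3 * (2 * PI * h) ^ 2 * INR q ^ 2 <= 12 * PI^2 / (INR q)^2).
  { replace (12 * PI^2 / (INR q)^2) with (3 * (4 * PI^2 / (INR q)^4) * (INR q)^2) by (field; lra).
    apply Rmult_le_compat_r. lra. lra. }
  replace ((2 * PI + 12 * PI ^ 2) * B / INR q ^ 2) with (B * (2 * PI / (INR q)^2) + B * (12 * PI^2 / (INR q)^2)) by (field; lra).
  assert (B * Rabs (Vf h q) <= B * (2 * PI / (INR q)^2)) by (apply Rmult_le_compat_l; lra).
  assert (B * RS (fun k => Rabs (Vf h (1 + k)%nat - Vf h (1 + S k)%nat)) 0 (q - 1) <= B * (12 * PI^2 / (INR q)^2))
    by (apply Rmult_le_compat_l; lra).
  lra.
Qed.

Definition Pc x N := RS (fun k => cos (theta x k) * w2 k) 1 N.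
Definition Ps x N := RS (fun k => sin (theta x k) * w2 k) 1 N.

Lemma Bq_nonneg q : 0 <= Bq q.
Proof. apply sqrt_pos. Qed.

Lemma diff_bound (p q N : nat) (x : R) :
  (1 <= q)%nat -> Nat.gcd q p = 1%nat ->
  Rabs (x - INR p / INR q) <= 1 / (INR q)^2 -> (q <= N)%nat ->
  Rabs (Pc x N - Pc (INR p / INR q) N) <= 1000 * Bq q / (INR q)^2 /\
  Rabs (Ps x N - Ps (INR p / INR q) N) <= 1000 * Bq q / (INR q)^2.
Proof.
  intros Hq Hg Hx HN.
  set (r := INR p / INR q). set (B := Bq q). set (h := x - r).
  pose proof (Bq_nonneg q) as HB. fold B in HB.
  pose proof (INR_ge1 q Hq) as Q1.
  assert (Q2: 0 < (INR q)^2) by (apply pow_lt; lra).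
  assert (Hr: Rabs (r - INR p / INR q) <= 1 / (INR q)^2).
  { unfold r. rewrite Rminus_diag, Rabs_R0. apply Rdiv_le_0_compat; lra. }
  pose proof (block_bound p q) as BB.
  assert (gcx: good (fun k => cos (theta x k)) q B).
  { apply growth; auto. intros a L HL. apply (BB a L x Hq Hg Hx HL). }
  assert (gsx: good (fun k => sin (theta x k)) q B).
  { apply growth; auto. intros a L HL. apply (BB a L x Hq Hg Hx HL). }
  assert (gcr: good (fun k => cos (theta r k)) q B).
  { apply growth; auto. intros a L HL. apply (BB a L r Hq Hg Hr HL). }
  assert (gsr: good (fun k => sin (theta r k)) q B).
  { apply growth; auto. intros a L HL. apply (BB a L r Hq Hg Hr HL). }
  assert (bcr: forall j, (1 <= j <= q)%nat -> Rabs (RS (fun k => cos (theta r k)) 1 j) <= B).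
  { intros j Hj. apply (BB 1%nat j r Hq Hg Hr). lia. }
  assert (bsr: forall j, (1 <= j <= q)%nat -> Rabs (RS (fun k => sin (theta r k)) 1 j) <= B).
  { intros j Hj. apply (BB 1%nat j r Hq Hg Hr). lia. }
  assert (Hh: Rabs h <= 1 / (INR q)^2) by exact Hx.
  assert (Eth: forall k, theta x k = theta r k + 2 * PI * h * (INR k)^2).
  { intros k. unfold theta, h. ring. }
  unfold Pc, Ps.
  replace N with (q + (N - q))%nat by lia.
  rewrite !RS_split. replace (1 + q)%nat with (q + 1)%nat by lia.
  pose proof (tail_bound _ q B (N - q) Hq HB gcx) as T1.
  pose proof (tail_bound _ q B (N - q) Hq HB gsx) as T2.
  pose proof (tail_bound _ q B (N - q) Hq HB gcr) as T3.
  pose proof (tail_bound _ q B (N - q) Hq HB gsr) as T4.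
  pose proof (head_U _ q B h Hq HB bcr Hh) as H1.
  pose proof (head_V _ q B h Hq HB bcr Hh) as H2.
  pose proof (head_U _ q B h Hq HB bsr Hh) as H3.
  pose proof (head_V _ q B h Hq HB bsr Hh) as H4.
  assert (Ec: RS (fun k => cos (theta x k) * w2 k) 1 q - RS (fun k => cos (theta r k) * w2 k) 1 q =
              RS (fun k => cos (theta r k) * Uf h k) 1 q - RS (fun k => sin (theta r k) * Vf h k) 1 q).
  { rewrite <- !RS_minus. apply RS_ext. intros k Hk. rewrite Eth, cos_plus. unfold w2, Uf, Vf.
    assert (0 < INR k) by (apply lt_0_INR; lia). field. lra. }
  assert (Es: RS (fun k => sin (theta x k) * w2 k) 1 q - RS (fun k => sin (theta r k) * w2 k) 1 q =
              RS (fun k => sin (theta r k) * Uf h k) 1 q + RS (fun k => cos (theta r k) * Vf h k) 1 q).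
  { rewrite <- RS_plus, <- RS_minus. apply RS_ext. intros k Hk. rewrite Eth, sin_plus. unfold w2, Uf, Vf.
    assert (0 < INR k) by (apply lt_0_INR; lia). field. lra. }
  pose proof PI_4. pose proof PI_gt3.
  assert (Kb: 20 * PI ^ 2 * B / INR q ^ 2 + (2 * PI + 12 * PI ^ 2) * B / INR q ^ 2 + 6 * B / (INR q)^2
             <= 1000 * B / INR q ^ 2).
  { assert (32*PI^2 + 2*PI + 6 <= 1000) by nra.
    replace (20 * PI ^ 2 * B / INR q ^ 2 + (2 * PI + 12 * PI ^ 2) * B / INR q ^ 2 + 6 * B / (INR q)^2)
      with ((32*PI^2 + 2*PI + 6) * B * / INR q ^ 2) by (field; lra).
    unfold Rdiv. apply Rmult_le_compat_r. left; apply Rinv_0_lt_compat; lra.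
    apply Rmult_le_compat_r; lra. }
  split.
  - replace (RS (fun k => cos (theta x k) * w2 k) 1 q + RS (fun k => cos (theta x k) * w2 k) (q + 1) (N - q) -
      (RS (fun k => cos (theta r k) * w2 k) 1 q + RS (fun k => cos (theta r k) * w2 k) (q + 1) (N - q)))
     with ((RS (fun k => cos (theta r k) * Uf h k) 1 q - RS (fun k => sin (theta r k) * Vf h k) 1 q)
           + RS (fun k => cos (theta x k) * w2 k) (q + 1) (N - q) - RS (fun k => cos (theta r k) * w2 k) (q + 1) (N - q))
      by lra.
    unfold Rminus at 1. eapply Rle_trans. apply Rabs_triang. rewrite Rabs_Ropp.
    eapply Rle_trans. apply Rplus_le_compat_r. apply Rabs_triang.
    eapply Rle_trans. apply Rplus_le_compat_r. apply Rplus_le_compat_r. unfold Rminus. apply Rabs_triang.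
    rewrite Rabs_Ropp. lra.
  - replace (RS (fun k => sin (theta x k) * w2 k) 1 q + RS (fun k => sin (theta x k) * w2 k) (q + 1) (N - q) -
      (RS (fun k => sin (theta r k) * w2 k) 1 q + RS (fun k => sin (theta r k) * w2 k) (q + 1) (N - q)))
     with ((RS (fun k => sin (theta r k) * Uf h k) 1 q + RS (fun k => cos (theta r k) * Vf h k) 1 q)
           + RS (fun k => sin (theta x k) * w2 k) (q + 1) (N - q) - RS (fun k => sin (theta r k) * w2 k) (q + 1) (N - q))
      by lra.
    unfold Rminus at 1. eapply Rle_trans. apply Rabs_triang. rewrite Rabs_Ropp.
    eapply Rle_trans. apply Rplus_le_compat_r. apply Rabs_triang.
    eapply Rle_trans. apply Rplus_le_compat_r. apply Rplus_le_compat_r. apply Rabs_triang.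
    lra.
Qed.

Lemma sum_RS g n : sum_f_R0 g n = RS g 0 (S n).
Proof. induction n; simpl. lra. rewrite IHn. simpl. reflexivity. Qed.

Lemma sym_partial_RS (f : Z -> R) N :
  sym_partial f N = f 0%Z + RS (fun n => f (Z.of_nat n) + f (- Z.of_nat n)%Z) 1 N.
Proof.
  unfold sym_partial. rewrite sum_RS.
  set (g := fun n : nat => f (Z.of_nat n - Z.of_nat N)%Z).
  replace (S (2 * N)) with (N + S N)%nat by lia. rewrite RS_split. rewrite RS_first.
  rewrite (RS_rev g N). simpl (0 + N)%nat.
  assert (E1: g N = f 0%Z) by (unfold g; f_equal; lia).
  assert (E2: RS (fun k => g (N - 1 - k)%nat) 0 N = RS (fun n => f (- Z.of_nat n)%Z) 1 N).
  { rewrite (RS_shift _ 1). apply RS_ext. intros k Hk. unfold g. f_equal. lia. }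
  assert (E3: RS g (S N) N = RS (fun n => f (Z.of_nat n)) 1 N).
  { rewrite (RS_shift g), (RS_shift _ 1). apply RS_ext. intros k Hk. unfold g. f_equal. lia. }
  rewrite E1, E2, E3, RS_plus. lra.
Qed.

Lemma IZR_sq_nat n : IZR (Z.of_nat n) ^ 2 = INR n ^ 2.
Proof. rewrite <- INR_IZR_INZ. reflexivity. Qed.

Lemma IZR_sq_neg n : IZR (- Z.of_nat n) ^ 2 = INR n ^ 2.
Proof. rewrite opp_IZR, <- INR_IZR_INZ. ring. Qed.

Lemma re_partial t N :
  sym_partial (fun k => phi_term_re k t) N = (RS w2 1 N - Pc (2 * PI * t) N) / (2 * PI^2).
Proof.
  rewrite sym_partial_RS. unfold phi_term_re at 1. simpl Z.eqb. cbv iota.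
  unfold Pc. rewrite <- RS_minus. unfold Rdiv. rewrite Rmult_comm, <- RS_scal.
  rewrite Rplus_0_l. apply RS_ext. intros k Hk.
  assert (Z.eqb (Z.of_nat k) 0 = false) by (apply Z.eqb_neq; lia).
  assert (Z.eqb (- Z.of_nat k) 0 = false) by (apply Z.eqb_neq; lia).
  unfold phi_term_re. rewrite H, H0. rewrite IZR_sq_nat, IZR_sq_neg.
  assert (0 < INR k) by (apply lt_0_INR; lia). pose proof PI_gt3.
  unfold w2, theta.
  replace (4 * PI ^ 2 * INR k ^ 2 * t) with (2 * PI * INR k ^ 2 * (2 * PI * t)) by ring.
  field. split; lra.
Qed.

Lemma im_partial t N :
  sym_partial (fun k => phi_term_im k t) N = t + Ps (2 * PI * t) N / (2 * PI^2).
Proof.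
  rewrite sym_partial_RS. unfold phi_term_im at 1. simpl Z.eqb. cbv iota.
  unfold Ps. unfold Rdiv. rewrite (Rmult_comm (RS _ _ _)), <- RS_scal.
  f_equal. apply RS_ext. intros k Hk.
  assert (Z.eqb (Z.of_nat k) 0 = false) by (apply Z.eqb_neq; lia).
  assert (Z.eqb (- Z.of_nat k) 0 = false) by (apply Z.eqb_neq; lia).
  unfold phi_term_im. rewrite H, H0. rewrite IZR_sq_nat, IZR_sq_neg.
  assert (0 < INR k) by (apply lt_0_INR; lia). pose proof PI_gt3.
  unfold w2, theta.
  replace (4 * PI ^ 2 * INR k ^ 2 * t) with (2 * PI * INR k ^ 2 * (2 * PI * t)) by ring.
  field. split; lra.
Qed.

Lemma lim_diff_bound (u v : nat -> R) l1 l2 K N0 :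
  Un_cv u l1 -> Un_cv v l2 -> (forall N, (N0 <= N)%nat -> Rabs (u N - v N) <= K) ->
  Rabs (l1 - l2) <= K.
Proof.
  intros Hu Hv HK. destruct (Rle_dec (Rabs (l1 - l2)) K) as [|Hn]; auto. exfalso.
  set (e := (Rabs (l1 - l2) - K) / 2).
  assert (He: 0 < e) by (unfold e; lra).
  destruct (Hu e He) as [N1 H1]. destruct (Hv e He) as [N2 H2].
  set (N := Nat.max N0 (Nat.max N1 N2)).
  specialize (H1 N ltac:(unfold N; lia)). specialize (H2 N ltac:(unfold N; lia)).
  specialize (HK N ltac:(unfold N; lia)). unfold R_dist in *.
  assert (Rabs (l1 - l2) <= Rabs (l1 - u N) + Rabs (u N - v N) + Rabs (v N - l2)).
  { replace (l1 - l2) with ((l1 - u N) + (u N - v N) + (v N - l2)) by ring.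
    eapply Rle_trans. apply Rabs_triang. apply Rplus_le_compat_r. apply Rabs_triang. }
  rewrite Rabs_minus_sym in H1. unfold e in *. lra.
Qed.

Definition Dq (q : nat) : R := 300 * Bq q / (INR q)^2 + 1 / (INR q)^2.

Lemma sqrt_sum_sq a b : sqrt (a^2 + b^2) <= Rabs a + Rabs b.
Proof.
  rewrite <- (sqrt_Rsqr (Rabs a + Rabs b)) by (pose proof (Rabs_pos a); pose proof (Rabs_pos b); lra).
  apply sqrt_le_1_alt. unfold Rsqr. rewrite <- (pow2_abs a), <- (pow2_abs b).
  pose proof (Rabs_pos a); pose proof (Rabs_pos b). nra.
Qed.

Lemma diam_pair (p q : nat) t1 t2 z1 z2 :
  (1 <= q)%nat -> Nat.gcd q p = 1%nat ->
  Rabs (2 * PI * t1 - INR p / INR q) <= 1 / (INR q)^2 ->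
  Rabs (2 * PI * t2 - INR p / INR q) <= 1 / (INR q)^2 ->
  phi_at t1 z1 -> phi_at t2 z2 -> cdist z1 z2 <= Dq q.
Proof.
  intros Hq Hg H1 H2 [Re1 Im1] [Re2 Im2].
  set (r := INR p / INR q). set (B := Bq q).
  pose proof (Bq_nonneg q) as HB. fold B in HB.
  pose proof (INR_ge1 q Hq) as Q1.
  assert (Q2: 0 < (INR q)^2) by (apply pow_lt; lra).
  pose proof PI_gt3 as P3.
  assert (P2: 18 <= 2 * PI^2) by nra.
  assert (Kpc: forall N, (q <= N)%nat ->
     Rabs (Pc (2*PI*t2) N - Pc (2*PI*t1) N) <= 2000 * B / (INR q)^2 /\
     Rabs (Ps (2*PI*t1) N - Ps (2*PI*t2) N) <= 2000 * B / (INR q)^2).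
  { intros N HN. destruct (diff_bound p q N (2*PI*t1) Hq Hg H1 HN) as [A1 A2].
    destruct (diff_bound p q N (2*PI*t2) Hq Hg H2 HN) as [A3 A4]. fold r B in A1, A2, A3, A4.
    split.
    - replace (Pc (2 * PI * t2) N - Pc (2 * PI * t1) N) with
        ((Pc (2 * PI * t2) N - Pc r N) - (Pc (2 * PI * t1) N - Pc r N)) by ring.
      eapply Rle_trans. apply Rabs_triang. rewrite Rabs_Ropp. lra.
    - replace (Ps (2 * PI * t1) N - Ps (2 * PI * t2) N) with
        ((Ps (2 * PI * t1) N - Ps r N) - (Ps (2 * PI * t2) N - Ps r N)) by ring.
      eapply Rle_trans. apply Rabs_triang. rewrite Rabs_Ropp. lra. }
  assert (K1: 2000 * B / (INR q)^2 / (2 * PI^2) <= 112 * B / (INR q)^2).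
  { unfold Rdiv. rewrite !Rmult_assoc. apply Rmult_le_reg_l with ((INR q)^2 * (2 * PI^2)).
    nra. field_simplify; try lra. nra. }
  assert (Dre: Rabs (fst z1 - fst z2) <= 112 * B / (INR q)^2).
  { eapply Rle_trans. 2: apply K1.
    apply (lim_diff_bound _ _ _ _ _ q Re1 Re2). intros N HN.
    rewrite !re_partial. destruct (Kpc N HN) as [A _].
    replace ((RS w2 1 N - Pc (2 * PI * t1) N) / (2 * PI ^ 2) - (RS w2 1 N - Pc (2 * PI * t2) N) / (2 * PI ^ 2))
      with ((Pc (2 * PI * t2) N - Pc (2 * PI * t1) N) / (2 * PI ^ 2)) by (field; lra).
    rewrite Rabs_div by lra. rewrite (Rabs_right (2 * PI^2)) by lra.
    unfold Rdiv. apply Rmult_le_compat_r. left; apply Rinv_0_lt_compat; lra. exact A. }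
  assert (Ht: Rabs (t1 - t2) <= 1 / (INR q)^2).
  { replace (t1 - t2) with (((2 * PI * t1 - r) - (2 * PI * t2 - r)) / (2 * PI)) by (field; lra).
    rewrite Rabs_div by lra. rewrite (Rabs_right (2 * PI)) by lra.
    assert (Rabs ((2 * PI * t1 - r) - (2 * PI * t2 - r)) <= 2 / (INR q)^2).
    { eapply Rle_trans. unfold Rminus at 1. apply Rabs_triang. rewrite Rabs_Ropp. fold r in H1, H2.
      replace (2 / INR q ^ 2) with (1 / INR q ^ 2 + 1 / INR q ^2) by (field; lra). apply Rplus_le_compat; lra. }
    apply Rmult_le_reg_r with (2 * PI). lra. unfold Rdiv at 1. rewrite Rmult_assoc, Rinv_l by lra.
    rewrite Rmult_1_r. eapply Rle_trans. apply H. apply Rmult_le_reg_r with ((INR q)^2). lra.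
    field_simplify; lra. }
  assert (Dim: Rabs (snd z1 - snd z2) <= 1 / (INR q)^2 + 112 * B / (INR q)^2).
  { apply (lim_diff_bound _ _ _ _ _ q Im1 Im2). intros N HN.
    rewrite !im_partial. destruct (Kpc N HN) as [_ A].
    replace (t1 + Ps (2 * PI * t1) N / (2 * PI ^ 2) - (t2 + Ps (2 * PI * t2) N / (2 * PI ^ 2)))
      with ((t1 - t2) + (Ps (2 * PI * t1) N - Ps (2 * PI * t2) N) / (2 * PI ^ 2)) by (field; lra).
    eapply Rle_trans. apply Rabs_triang. apply Rplus_le_compat. auto.
    eapply Rle_trans. 2: apply K1.
    rewrite Rabs_div by lra. rewrite (Rabs_right (2 * PI^2)) by lra.
    unfold Rdiv. apply Rmult_le_compat_r. left; apply Rinv_0_lt_compat; lra. exact A. }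
  unfold cdist. eapply Rle_trans. apply sqrt_sum_sq. unfold Dq. fold B.
  assert (0 <= 76 * B / (INR q)^2) by (apply Rdiv_le_0_compat; lra).
  replace (300 * B / INR q ^ 2) with (112 * B / INR q ^ 2 + 112 * B / INR q ^ 2 + 76 * B / (INR q)^2) by (field; lra).
  lra.
Qed.

Definition frc (r : R) : R := r - IZR (Int_part r).

Lemma frc_bound r : 0 <= frc r < 1.
Proof. unfold frc. destruct (base_Int_part r). lra. Qed.

Lemma int_dist r (m : Z) : Rmin (frc r) (1 - frc r) <= Rabs (r - IZR m).
Proof.
  unfold frc. set (n := Int_part r). destruct (base_Int_part r) as [H1 H2]. fold n in H1, H2.
  destruct (Z.le_gt_cases m n).
  - apply IZR_le in H. rewrite Rabs_right by lra. pose proof (Rmin_l (r - IZR n) (1 - (r - IZR n))). lra.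
  - assert (IZR (n + 1) <= IZR m) by (apply IZR_le; lia). rewrite plus_IZR in H0.
    rewrite Rabs_left1 by lra. pose proof (Rmin_r (r - IZR n) (1 - (r - IZR n))). lra.
Qed.

Lemma delta_exists (x : R) (Q : nat) : ~ is_rational x ->
  exists d, 0 < d /\ forall q, (1 <= q < Q)%nat -> forall m : Z, d <= Rabs (INR q * x - IZR m).
Proof.
  intros Hirr. induction Q.
  - exists 1. split. lra. intros; lia.
  - destruct IHQ as [d [Hd Hq]].
    destruct (Nat.eq_dec Q 0).
    + exists d. split; auto. intros; lia.
    + set (r := INR Q * x).
      assert (Hf: frc r <> 0).
      { intros E. apply Hirr. exists (Int_part r), (Z.of_nat Q). split. lia.
        unfold frc in E. rewrite <- INR_IZR_INZ. assert (0 < INR Q) by (apply lt_0_INR; lia).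
        unfold r in *. replace (IZR (Int_part (INR Q * x))) with (INR Q * x) by lra. field. lra. }
      pose proof (frc_bound r).
      exists (Rmin d (Rmin (frc r) (1 - frc r))). split.
      * apply Rmin_glb_lt; auto. apply Rmin_glb_lt; lra.
      * intros q Hq' m. destruct (Nat.eq_dec q Q).
        -- subst q. eapply Rle_trans. apply Rmin_r. apply int_dist.
        -- eapply Rle_trans. apply Rmin_l. apply Hq. lia.
Qed.

Lemma pigeon n (f : nat -> nat) : (forall j, (j <= n)%nat -> (f j < n)%nat) ->
  exists j1 j2, (j1 < j2 <= n)%nat /\ f j1 = f j2.
Proof.
  revert f. induction n; intros f Hf.
  - specialize (Hf 0%nat (le_n 0)). lia.
  - destruct (Classical_Prop.classic (exists j, (j <= n)%nat /\ f j = f (S n))) as [[j [Hj Ej]]|Hno].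
    + exists j, (S n). split. lia. auto.
    + set (g := fun j => if Nat.eqb (f j) n then f (S n) else f j).
      assert (Hg: forall j, (j <= n)%nat -> (g j < n)%nat).
      { intros j Hj. unfold g. pose proof (Hf j ltac:(lia)). pose proof (Hf (S n) ltac:(lia)).
        destruct (Nat.eqb_spec (f j) n).
        - assert (f (S n) <> n). { intro E. apply Hno. exists j. split; auto. lia. } lia.
        - lia. }
      destruct (IHn g Hg) as [j1 [j2 [Hj Ej]]].
      unfold g in Ej.
      destruct (Nat.eqb_spec (f j1) n); destruct (Nat.eqb_spec (f j2) n).
      * exists j1, j2. split. lia. lia.
      * exfalso. apply Hno. exists j2. split. lia. auto.
      * exfalso. apply Hno. exists j1. split. lia. auto.
      * exists j1, j2. split. lia. auto.
Qed.

Lemma Int_part_range y (N : nat) : 0 <= y < INR N -> (0 <= Int_part y < Z.of_nat N)%Z.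
Proof.
  intros Hy. destruct (base_Int_part y) as [H1 H2]. split.
  - assert (-1 < IZR (Int_part y)) by lra. apply lt_IZR in H. lia.
  - assert (IZR (Int_part y) < IZR (Z.of_nat N)) by (rewrite <- INR_IZR_INZ; lra). apply lt_IZR in H. lia.
Qed.

Lemma Int_part_eq_close y1 y2 : Int_part y1 = Int_part y2 -> Rabs (y1 - y2) < 1.
Proof.
  intros E. destruct (base_Int_part y1). destruct (base_Int_part y2). rewrite E in *.
  apply Rabs_def1; lra.
Qed.

Lemma dirichlet (x : R) (Q : nat) : 0 < x < 1 -> ~ is_rational x -> (1 <= Q)%nat ->
  exists q p : nat, (Q <= q)%nat /\ (p <= q)%nat /\ Nat.gcd q p = 1%nat /\
    Rabs (x - INR p / INR q) <= 1 / (INR q)^2.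
Proof.
  intros Hx Hirr HQ.
  destruct (delta_exists x Q Hirr) as [d [Hd Hdq]].
  destruct (INR_unbounded (1 / d)) as [N HN].
  assert (HNd: 0 < 1 / d) by (apply Rdiv_lt_0_compat; lra).
  assert (HN1: (1 <= N)%nat). { destruct N. simpl in HN. lra. lia. }
  pose proof (INR_ge1 N HN1) as N1.
  assert (Nd: 1 / INR N < d).
  { apply Rmult_lt_reg_r with (INR N). lra. field_simplify; try lra.
    apply Rmult_lt_reg_r with (/ d). apply Rinv_0_lt_compat; lra. rewrite Rmult_assoc, Rinv_r by lra.
    unfold Rdiv in HN. lra. }
  set (f := fun j : nat => Z.to_nat (Int_part (INR N * frc (INR j * x)))).
  assert (Hf: forall j, (j <= N)%nat -> (f j < N)%nat).
  { intros j _. unfold f. pose proof (frc_bound (INR j * x)).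
    destruct (Int_part_range (INR N * frc (INR j * x)) N). nra. lia. }
  destruct (pigeon N f Hf) as [j1 [j2 [Hj Ej]]].
  assert (Eb: Int_part (INR N * frc (INR j1 * x)) = Int_part (INR N * frc (INR j2 * x))).
  { unfold f in Ej. pose proof (frc_bound (INR j1 * x)). pose proof (frc_bound (INR j2 * x)).
    destruct (Int_part_range (INR N * frc (INR j1 * x)) N). nra.
    destruct (Int_part_range (INR N * frc (INR j2 * x)) N). nra. lia. }
  apply Int_part_eq_close in Eb.
  set (q0 := (j2 - j1)%nat).
  set (m0 := (Int_part (INR j2 * x) - Int_part (INR j1 * x))%Z).
  assert (Hq0m0: Rabs (INR q0 * x - IZR m0) < 1 / INR N).
  { unfold q0, m0. rewrite minus_INR by lia. rewrite minus_IZR.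
    replace ((INR j2 - INR j1) * x - (IZR (Int_part (INR j2 * x)) - IZR (Int_part (INR j1 * x))))
      with (- (INR N * frc (INR j1 * x) - INR N * frc (INR j2 * x)) / INR N) by (unfold frc; field; lra).
    unfold Rdiv. rewrite Rabs_mult, Rabs_Ropp. rewrite (Rabs_right (/ INR N)).
    2:{ apply Rle_ge. left. apply Rinv_0_lt_compat. lra. }
    apply Rmult_lt_compat_r. apply Rinv_0_lt_compat; lra. exact Eb. }
  assert (Hq0: (1 <= q0 <= N)%nat) by (unfold q0; lia).
  pose proof (INR_ge1 q0 ltac:(lia)) as Q01.
  assert (Hm0: (0 <= m0)%Z).
  { apply Rabs_def2 in Hq0m0. destruct Hq0m0 as [A B].
    assert (-1 < IZR m0).
    { assert (1 / INR N <= 1). { apply Rmult_le_reg_r with (INR N). lra. field_simplify; lra. }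
      assert (0 < INR q0 * x) by nra. lra. }
    apply lt_IZR in H. lia. }
  set (m := Z.to_nat m0).
  assert (Em: IZR m0 = INR m) by (unfold m; rewrite INR_IZR_INZ; f_equal; lia).
  rewrite Em in Hq0m0.
  set (g := Nat.gcd q0 m).
  assert (Hg0: g <> 0%nat). { unfold g. intro E. apply Nat.gcd_eq_0 in E. lia. }
  destruct (Nat.gcd_divide_l q0 m) as [kq Ekq]. fold g in Ekq.
  destruct (Nat.gcd_divide_r q0 m) as [kp Ekp]. fold g in Ekp.
  exists kq, kp.
  assert (Hcop: Nat.gcd kq kp = 1%nat).
  { pose proof (Nat.gcd_div_gcd q0 m g Hg0 eq_refl).
    rewrite Ekq, Ekp in H at 1. rewrite !Nat.div_mul in H by auto. exact H. }
  assert (Hkq: (1 <= kq)%nat) by (destruct kq; lia).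
  pose proof (INR_ge1 g ltac:(lia)) as G1.
  pose proof (INR_ge1 kq Hkq) as KQ1.
  assert (EqR: INR q0 = INR kq * INR g) by (rewrite Ekq, mult_INR; ring).
  assert (EmR: INR m = INR kp * INR g) by (rewrite Ekp, mult_INR; ring).
  assert (Hsmall: Rabs (INR kq * x - INR kp) < 1 / INR N).
  { replace (INR kq * x - INR kp) with ((INR q0 * x - INR m) / INR g) by (rewrite EqR, EmR; field; lra).
    rewrite Rabs_div by lra. rewrite (Rabs_right (INR g)) by lra.
    apply Rle_lt_trans with (Rabs (INR q0 * x - INR m)). 2: auto.
    apply Rmult_le_reg_r with (INR g). lra. field_simplify; try lra.
    pose proof (Rabs_pos (INR q0 * x - INR m)). nra. }
  assert (HQq: (Q <= kq)%nat).
  { destruct (Nat.le_gt_cases Q kq); auto. exfalso.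
    specialize (Hdq kq ltac:(lia) (Z.of_nat kp)). rewrite <- INR_IZR_INZ in Hdq. lra. }
  assert (HkN: INR kq <= INR N).
  { assert (INR q0 <= INR N) by (apply le_INR; lia). rewrite EqR in H. nra. }
  assert (Happ: Rabs (x - INR kp / INR kq) <= 1 / (INR kq)^2).
  { replace (x - INR kp / INR kq) with ((INR kq * x - INR kp) / INR kq) by (field; lra).
    rewrite Rabs_div by lra. rewrite (Rabs_right (INR kq)) by lra.
    apply Rmult_le_reg_r with (INR kq). lra. field_simplify; try lra.
    apply Rle_trans with (1 / INR N). lra.
    apply Rmult_le_reg_r with (INR N * INR kq). nra. field_simplify; lra. }
  repeat split; auto.
  assert (INR kp < INR kq + 1).
  { apply Rabs_bnd in Happ. destruct Happ.
    assert (1 / INR kq ^ 2 <= 1 / INR kq). { apply Rmult_le_reg_r with (INR kq ^2). nra. field_simplify; nra. }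
    assert (1 / INR kq <= 1). { apply Rmult_le_reg_r with (INR kq). nra. field_simplify; nra. }
    assert (INR kp / INR kq * INR kq = INR kp) by (field; lra).
    assert (INR kp / INR kq < 1 + 1 / INR kq) by lra.
    assert (HH: INR kp / INR kq * INR kq < (1 + 1 / INR kq) * INR kq) by (apply Rmult_lt_compat_r; lra).
    assert (E2: (1 + 1 / INR kq) * INR kq = INR kq + 1) by (field; lra). lra. }
  assert (HL: INR kp < INR (kq + 1)) by (rewrite plus_INR; simpl; lra).
  apply INR_lt in HL. lia.
Qed.

Lemma Rpower_pos x y : 0 < Rpower x y.
Proof. unfold Rpower. apply exp_pos. Qed.

Lemma ln_lt_self y : 0 < y -> ln y < y.
Proof.
  intros Hy. rewrite <- (ln_exp y) at 2. apply ln_increasing; auto.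
  pose proof (exp_ineq1 y). destruct (Req_dec y 0). lra. specialize (H H0). lra.
Qed.

Lemma one_plus_ln_le (q : nat) e : (1 <= q)%nat -> 0 < e ->
  1 + ln (INR q) <= (1 + 1 / e) * Rpower (INR q) e.
Proof.
  intros Hq He. pose proof (INR_ge1 q Hq).
  assert (H1: 1 <= Rpower (INR q) e).
  { rewrite <- (Rpower_O (INR q)) by lra. apply Rle_Rpower; lra. }
  assert (H2: e * ln (INR q) < Rpower (INR q) e).
  { rewrite <- ln_Rpower. apply ln_lt_self. apply Rpower_pos. }
  assert (ln (INR q) <= 1 / e * Rpower (INR q) e).
  { apply Rmult_le_reg_l with e. lra. field_simplify; lra. }
  nra.
Qed.

Lemma Rpower_INR1 q : (1 <= q)%nat -> Rpower (INR q) 1 = INR q.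
Proof. intros; apply Rpower_1. pose proof (INR_ge1 q H); lra. Qed.

Lemma Dq_bound (q : nat) e : (1 <= q)%nat -> 0 < e ->
  Dq q <= 1806 * sqrt (1 + 1 / e) * Rpower (INR q) ((1 + e) / 2 - 2).
Proof.
  intros Hq He. pose proof (INR_ge1 q Hq) as Q1.
  assert (Q2: 0 < (INR q)^2) by (apply pow_lt; lra).
  pose proof (ln_nat_nonneg q Hq) as L0.
  unfold Dq, Bq.
  set (S := sqrt (33 * INR q * (1 + ln (INR q)))).
  assert (S1: 1 <= S).
  { unfold S. apply Rle_trans with (sqrt 1). rewrite sqrt_1; lra. apply sqrt_le_1_alt. assert (0 <= INR q * ln (INR q)) by (apply Rmult_le_pos; lra). nra. }
  assert (D1: 300 * S / INR q ^ 2 + 1 / INR q ^ 2 <= 301 * S / INR q ^ 2).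
  { apply Rmult_le_reg_r with ((INR q)^2). lra. field_simplify; lra. }
  eapply Rle_trans. apply D1.
  assert (S2: S <= 6 * sqrt (1 + 1/e) * Rpower (INR q) ((1 + e) / 2)).
  { unfold S. rewrite (sqrt_mult_alt (33 * INR q)) by lra.
    rewrite sqrt_mult_alt by lra.
    assert (sqrt 33 <= 6). { rewrite <- (sqrt_square 6) by lra. apply sqrt_le_1_alt. lra. }
    assert (sqrt (INR q) * sqrt (1 + ln (INR q)) <= sqrt (1 + 1/e) * Rpower (INR q) ((1 + e) / 2)).
    { rewrite <- sqrt_mult_alt by lra.
      assert (INR q * (1 + ln (INR q)) <= (1 + 1/e) * Rpower (INR q) (1 + e)).
      { rewrite Rpower_plus, Rpower_INR1 by auto. pose proof (one_plus_ln_le q e Hq He). nra. }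
      eapply Rle_trans. apply sqrt_le_1_alt. apply H0.
      rewrite sqrt_mult_alt. apply Rmult_le_compat_l. apply sqrt_pos.
      rewrite <- Rpower_sqrt by apply Rpower_pos. rewrite Rpower_mult. right. reflexivity.
      assert (0 < 1/e) by (apply Rdiv_lt_0_compat; lra). lra. }
    pose proof (sqrt_pos 33). pose proof (sqrt_pos (INR q)). pose proof (sqrt_pos (1 + ln (INR q))).
    assert (0 <= sqrt (INR q) * sqrt (1 + ln (INR q))) by (apply Rmult_le_pos; lra).
    nra. }
  assert (E2: / (INR q)^2 = Rpower (INR q) (Ropp 2)).
  { rewrite Rpower_Ropp. f_equal. replace 2 with (INR 2) by (simpl; lra). rewrite Rpower_pow by lra. reflexivity. }
  replace (301 * S / INR q ^ 2) with (301 * S * Rpower (INR q) (Ropp 2)) by (unfold Rdiv; rewrite E2; ring).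
  replace ((1 + e) / 2 - 2) with ((1 + e)/2 + Ropp 2) by ring. rewrite Rpower_plus.
  pose proof (Rpower_pos (INR q) (Ropp 2)).
  assert (301 * S <= 301 * (6 * sqrt (1 + 1 / e) * Rpower (INR q) ((1 + e) / 2))) by lra.
  nra.
Qed.

Lemma Rpower_neg_anti a b c : 0 <= c -> 0 < a <= b -> Rpower b (Ropp c) <= Rpower a (Ropp c).
Proof.
  intros Hc Hab. rewrite !Rpower_Ropp. apply Rinv_le_contravar. apply Rpower_pos.
  apply Rle_Rpower_l; auto.
Qed.

Lemma rp_step y s : 2 <= y -> 0 < s ->
  Rpower y (Ropp (1 + s)) <= (Rpower (y - 1) (Ropp s) - Rpower y (Ropp s)) / s.
Proof.
  intros Hy Hs.
  destruct (MVT_cor2 (fun z => Rpower z (Ropp s)) (fun z => Ropp s * Rpower z (Ropp s - 1)) (y - 1) y)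
    as [c [E Hc]]. lra.
  { intros c Hc. apply derivable_pt_lim_power. lra. }
  cbv beta in E. replace (y - (y - 1)) with 1 in E by ring.
  assert (Rpower y (Ropp (1 + s)) <= Rpower c (Ropp (1 + s))) by (apply Rpower_neg_anti; lra).
  replace (Ropp s - 1) with (Ropp (1 + s)) in E by ring.
  apply Rmult_le_reg_r with s. auto. unfold Rdiv. rewrite Rmult_assoc, Rinv_l by lra. rewrite Rmult_1_r.
  nra.
Qed.

Lemma Rpower_base1 y : Rpower 1 y = 1.
Proof. unfold Rpower. rewrite ln_1, Rmult_0_r. apply exp_0. Qed.

Lemma zeta_bound s n : 0 < s ->
  RS (fun i => Rpower (INR (i + 1)) (Ropp (1 + s))) 0 n <= 1 + 1 / s.
Proof.
  intros Hs.
  assert (Hgen: forall m, (1 <= m)%nat ->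
    RS (fun i => Rpower (INR (i + 1)) (Ropp (1 + s))) 0 m <= 1 + (1 - Rpower (INR m) (Ropp s)) / s).
  { intros m Hm. induction m. lia.
    destruct m.
    - change (RS (fun i => Rpower (INR (i + 1)) (Ropp (1 + s))) 0 1) with (0 + Rpower (INR (0 + 0 + 1)) (Ropp (1 + s))).
      simpl (INR (0+0+1)). simpl (INR 1). rewrite !Rpower_base1. replace (1 - 1) with 0 by ring. unfold Rdiv. lra.
    - specialize (IHm ltac:(lia)).
      change (RS (fun i => Rpower (INR (i + 1)) (Ropp (1 + s))) 0 (S (S m))) with
        (RS (fun i => Rpower (INR (i + 1)) (Ropp (1 + s))) 0 (S m) + Rpower (INR (0 + S m + 1)) (Ropp (1 + s))).
      replace (0 + S m + 1)%nat with (S (S m)) by lia.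
      pose proof (rp_step (INR (S (S m))) s).
      replace (INR (S (S m)) - 1) with (INR (S m)) in H by (rewrite (S_INR (S m)); ring).
      assert (2 <= INR (S (S m))). { rewrite !S_INR. pose proof (pos_INR m). lra. }
      specialize (H H0 Hs).
      assert ((1 - Rpower (INR (S m)) (Ropp s)) / s + (Rpower (INR (S m)) (Ropp s) - Rpower (INR (S (S m))) (Ropp s)) / s
              = (1 - Rpower (INR (S (S m))) (Ropp s)) / s) by (field; lra).
      lra. }
  destruct n. simpl. assert (0 < 1 / s) by (apply Rdiv_lt_0_compat; lra). lra.
  eapply Rle_trans. apply Hgen. lia.
  pose proof (Rpower_pos (INR (S n)) (Ropp s)).
  assert ((1 - Rpower (INR (S n)) (Ropp s)) / s <= 1 / s).
  { unfold Rdiv. apply Rmult_le_compat_r. left; apply Rinv_0_lt_compat; lra. lra. }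
  lra.
Qed.

Definition epsa (a : R) := 3/2 - 2/a.
Definition e3 (a : R) := (1 + epsa a) / 2 - 2.
Definition taua (a : R) := (3 * a / 4 - 1) / 2.
Definition Aa (a : R) := 1806 * sqrt (1 + 1 / epsa a).
Definition K0 (a : R) := Rpower (Aa a) a * Rpower 4 (1 + taua a / 2).

Lemma epsa_pos a : 4/3 < a -> 0 < epsa a.
Proof. intros. unfold epsa. assert (2 / a < 3/2). { apply Rmult_lt_reg_r with a. lra. field_simplify; lra. } lra. Qed.

Lemma taua_pos a : 4/3 < a -> 0 < taua a.
Proof. intros. unfold taua. lra. Qed.

Lemma e3_neg a : 4/3 < a -> e3 a < 0.
Proof. intros. unfold e3, epsa. assert (0 < 2 / a) by (apply Rdiv_lt_0_compat; lra). lra. Qed.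

Lemma e3_alpha a : 4/3 < a -> e3 a * a = Ropp (2 + 2 * taua a).
Proof. intros. unfold e3, epsa, taua. field. lra. Qed.

Lemma Aa_pos a : 4/3 < a -> 0 < Aa a.
Proof.
  intros. unfold Aa. pose proof (epsa_pos a H).
  assert (0 < sqrt (1 + 1 / epsa a)). { apply sqrt_lt_R0. assert (0 < 1 / epsa a) by (apply Rdiv_lt_0_compat; lra). lra. }
  lra.
Qed.

Lemma Dq_pos q : (1 <= q)%nat -> 0 < Dq q.
Proof.
  intros Hq. unfold Dq. pose proof (INR_ge1 q Hq). pose proof (Bq_nonneg q).
  assert (0 < INR q ^ 2) by (apply pow_lt; lra).
  assert (0 <= 300 * Bq q / INR q ^ 2) by (apply Rdiv_le_0_compat; lra).
  assert (0 < 1 / INR q ^ 2) by (apply Rdiv_lt_0_compat; lra). lra.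
Qed.

Lemma Dq_le_A a q : 4/3 < a -> (1 <= q)%nat -> Dq q <= Aa a * Rpower (INR q) (e3 a).
Proof. intros. unfold Aa, e3. apply Dq_bound; auto. apply epsa_pos; auto. Qed.

Lemma weight_bound (a : R) (Q i : nat) : 4/3 < a -> (2 <= Q)%nat ->
  Rpower (Dq (Nat.sqrt (i + Q * Q))) a <=
  K0 a * Rpower (INR Q) (Ropp (taua a)) * Rpower (INR (i + 1)) (Ropp (1 + taua a / 2)).
Proof.
  intros Ha HQ.
  set (q := Nat.sqrt (i + Q * Q)).
  assert (HqQ: (Q <= q)%nat).
  { unfold q. rewrite <- (Nat.sqrt_square Q) at 1. apply Nat.sqrt_le_mono. lia. }
  assert (Hq1: (1 <= q)%nat) by lia.
  assert (Hsq: (i + Q * Q < S q * S q)%nat) by (unfold q; apply Nat.sqrt_spec; lia).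
  pose proof (INR_ge1 q Hq1) as Q1.
  pose proof (taua_pos a Ha) as Ht.
  set (t := taua a). assert (Ht': 0 < t) by exact Ht. clear Ht. rename Ht' into Ht.
  assert (S1: Rpower (Dq q) a <= Rpower (Aa a) a * Rpower (INR q) (Ropp (2 + 2 * t))).
  { apply Rle_trans with (Rpower (Aa a * Rpower (INR q) (e3 a)) a).
    apply Rle_Rpower_l. lra. split. apply Dq_pos; auto. apply Dq_le_A; auto.
    rewrite <- (Rpower_mult_distr (Aa a) (Rpower (INR q) (e3 a)) a).
    rewrite Rpower_mult. rewrite e3_alpha by auto. right; reflexivity.
    apply Aa_pos; auto. apply Rpower_pos. }
  assert (S4: Rpower (INR q) (Ropp (2 + 2 * t)) = Rpower (INR q) (Ropp (2 + t)) * Rpower (INR q) (Ropp t)).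
  { rewrite <- Rpower_plus. f_equal. ring. }
  assert (S5: Rpower (INR q) (Ropp t) <= Rpower (INR Q) (Ropp t)).
  { apply Rpower_neg_anti. lra. split. pose proof (INR_ge1 Q ltac:(lia)); lra. apply le_INR; auto. }
  assert (S6: Rpower (INR q) (Ropp (2 + t)) = Rpower (INR q * INR q) (Ropp (1 + t / 2))).
  { replace (INR q * INR q) with (Rpower (INR q) 2).
    rewrite Rpower_mult. f_equal. field.
    replace 2 with (INR 2) by (simpl; lra). rewrite Rpower_pow by lra. simpl; ring. }
  assert (S7: INR (i + 1) / 4 <= INR q * INR q).
  { assert (INR (i + 1) <= INR (S q * S q)) by (apply le_INR; lia).
    rewrite mult_INR, S_INR in H. apply Rmult_le_reg_r with 4. lra. nra. }
  assert (Hi: 0 < INR (i + 1)) by (apply lt_0_INR; lia).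
  assert (S8: Rpower (INR q * INR q) (Ropp (1 + t / 2)) <= Rpower (INR (i + 1) / 4) (Ropp (1 + t / 2))).
  { apply Rpower_neg_anti. lra. split; auto. apply Rdiv_lt_0_compat; lra. }
  assert (S9: Rpower (INR (i + 1) / 4) (Ropp (1 + t / 2)) = Rpower (INR (i + 1)) (Ropp (1 + t / 2)) * Rpower 4 (1 + t / 2)).
  { unfold Rdiv. rewrite <- (Rpower_mult_distr (INR (i+1)) (/ 4)); try lra.
    f_equal. unfold Rpower. rewrite ln_Rinv by lra. f_equal. ring. }
  pose proof (Rpower_pos (Aa a) a). pose proof (Rpower_pos 4 (1 + t / 2)).
  pose proof (Rpower_pos (INR q) (Ropp (2 + t))). pose proof (Rpower_pos (INR q) (Ropp t)).
  pose proof (Rpower_pos (INR (i + 1)) (Ropp (1 + t / 2))).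
  pose proof (Rpower_pos (INR Q) (Ropp t)).
  unfold K0. fold t.
  rewrite S4, S6 in S1. rewrite S9 in S8.
  eapply Rle_trans. apply S1.
  set (X := Rpower (INR q * INR q) (Ropp (1 + t / 2))) in *.
  set (Y := Rpower (INR q) (Ropp t)) in *.
  set (Z := Rpower (INR (i + 1)) (Ropp (1 + t / 2))) in *.
  set (W := Rpower 4 (1 + t / 2)) in *.
  set (V := Rpower (INR Q) (Ropp t)) in *.
  set (P := Rpower (Aa a) a) in *.
  assert (0 < X) by (unfold X; apply Rpower_pos).
  assert (X * Y <= (Z * W) * V) by (apply Rmult_le_compat; lra).
  replace (P * W * V * Z) with (P * (Z * W * V)) by ring.
  rewrite Rmult_assoc. apply Rmult_le_compat_l; lra.
Qed.

Lemma Rpower_thresh (x c : R) (T : R) : 0 < c -> 0 < T -> 0 < x ->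
  Rpower (Rpower T (/ (Ropp c))) (Ropp c) = T.
Proof.
  intros Hc HT Hx. rewrite Rpower_mult. replace (/ - c * - c) with 1 by (field; lra). apply Rpower_1; auto.
Qed.

Theorem mainTheorem3 : forall alpha : R, 4 / 3 < alpha -> hausdorff_null alpha phi_I.
Proof.
  intros a Ha delta eps Hdelta Heps.
  pose proof (taua_pos a Ha) as Ht. pose proof (e3_neg a Ha) as He3. pose proof (Aa_pos a Ha) as HA.
  set (t := taua a) in *. set (s := t / 2).
  assert (Hs: 0 < s) by (unfold s; lra).
  assert (HK0: 0 < K0 a) by (unfold K0; apply Rmult_lt_0_compat; apply Rpower_pos).
  set (K := K0 a * (1 + 1 / s)).
  assert (HK: 0 < K). { unfold K. assert (0 < 1 / s) by (apply Rdiv_lt_0_compat; lra). apply Rmult_lt_0_compat; lra. }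
  set (T2 := Rpower (eps / K) (/ (Ropp t))).
  set (T1 := Rpower (delta / Aa a) (/ (Ropp (Ropp (e3 a))))).
  destruct (INR_unbounded (Rmax T1 T2 + 2)) as [Q HQ].
  assert (HQ2: (2 <= Q)%nat).
  { assert (2 < INR Q). { pose proof (Rmax_l T1 T2). assert (0 < T1) by (unfold T1; apply Rpower_pos). lra. }
    destruct (Nat.le_gt_cases 2 Q); auto. assert (INR Q <= INR 1) by (apply le_INR; lia). simpl in H1. lra. }
  assert (HQT1: T1 <= INR Q) by (pose proof (Rmax_l T1 T2); lra).
  assert (HQT2: T2 <= INR Q) by (pose proof (Rmax_r T1 T2); lra).
  pose proof (INR_ge1 Q ltac:(lia)) as Q1.
  assert (CQ1: Rpower (INR Q) (e3 a) <= delta / Aa a).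
  { replace (e3 a) with (Ropp (Ropp (e3 a))) by ring.
    rewrite <- (Rpower_thresh (Ropp (e3 a)) (Ropp (e3 a)) (delta / Aa a)); try lra.
    apply Rpower_neg_anti. lra. split. unfold T1; apply Rpower_pos. auto.
    apply Rdiv_lt_0_compat; lra. }
  assert (CQ2: Rpower (INR Q) (Ropp t) <= eps / K).
  { rewrite <- (Rpower_thresh t t (eps / K)); try lra.
    apply Rpower_neg_anti. lra. split. unfold T2; apply Rpower_pos. auto.
    apply Rdiv_lt_0_compat; lra. }
  set (qf := fun i : nat => Nat.sqrt (i + Q * Q)).
  set (pf := fun i : nat => (i + Q * Q - qf i * qf i)%nat).
  assert (HqQ: forall i, (Q <= qf i)%nat).
  { intros i. unfold qf. rewrite <- (Nat.sqrt_square Q) at 1. apply Nat.sqrt_le_mono. lia. }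
  exists (fun i z => exists t0, in_I t0 /\ phi_at t0 z /\ Nat.gcd (qf i) (pf i) = 1%nat /\
                        Rabs (2 * PI * t0 - INR (pf i) / INR (qf i)) <= 1 / (INR (qf i))^2).
  exists (fun i => Dq (qf i)).
  split; [|split].
  - intros i. assert (Hq1: (1 <= qf i)%nat) by (specialize (HqQ i); lia).
    split. split. apply Dq_pos; auto.
    + apply Rle_trans with (Aa a * Rpower (INR (qf i)) (e3 a)). apply Dq_le_A; auto.
      assert (Rpower (INR (qf i)) (e3 a) <= Rpower (INR Q) (e3 a)).
      { replace (e3 a) with (Ropp (Ropp (e3 a))) by ring. apply Rpower_neg_anti. lra.
        split. lra. apply le_INR; auto. }
      assert (Aa a * Rpower (INR (qf i)) (e3 a) <= Aa a * (delta / Aa a)) by (apply Rmult_le_compat_l; lra).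
      replace (Aa a * (delta / Aa a)) with delta in H0 by (field; lra). lra.
    + intros z1 z2 [t1 [_ [P1 [G1 A1]]]] [t2 [_ [P2 [G2 A2]]]].
      apply (diam_pair (pf i) (qf i) t1 t2); auto.
  - intros z [t0 [HI Hphi]].
    destruct HI as [Hx Hirr].
    destruct (dirichlet (2 * PI * t0) Q Hx Hirr ltac:(lia)) as [q [p [HqQ' [Hpq [Hg Happ]]]]].
    exists (q * q + p - Q * Q)%nat.
    assert (E: (q * q + p - Q * Q + Q * Q = q * q + p)%nat).
    { assert (Q * Q <= q * q)%nat by (apply Nat.mul_le_mono; auto). lia. }
    assert (Eq: qf (q * q + p - Q * Q)%nat = q).
    { unfold qf. rewrite E. apply Nat.sqrt_unique. nia. }
    assert (Ep: pf (q * q + p - Q * Q)%nat = p).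
    { unfold pf. rewrite Eq, E. lia. }
    exists t0. rewrite Eq, Ep. exact (conj (conj Hx Hirr) (conj Hphi (conj Hg Happ))).
  - intros n. rewrite sum_RS.
    eapply Rle_trans. apply (RS_le _ (fun i => K0 a * Rpower (INR Q) (Ropp t) * Rpower (INR (i + 1)) (Ropp (1 + t / 2)))).
    { intros i _. apply weight_bound; auto. }
    rewrite (RS_scal (K0 a * Rpower (INR Q) (Ropp t))).
    pose proof (zeta_bound s (S n) Hs). unfold s in H. 
    pose proof (Rpower_pos (INR Q) (Ropp t)).
    assert (K0 a * Rpower (INR Q) (Ropp t) * RS (fun i => Rpower (INR (i + 1)) (Ropp (1 + t / 2))) 0 (S n)
            <= K0 a * Rpower (INR Q) (Ropp t) * (1 + 1 / s)).
    { apply Rmult_le_compat_l. apply Rmult_le_pos; lra. unfold s. lra. }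
    eapply Rle_trans. apply H1.
    replace (K0 a * Rpower (INR Q) (Ropp t) * (1 + 1 / s)) with (K * Rpower (INR Q) (Ropp t)) by (unfold K; ring).
    replace eps with (K * (eps / K)) by (field; lra).
    apply Rmult_le_compat_l; lra.
Qed.
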